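(* Let $m,n,m',n'$ be nonzero integers with $|m|<|n|$ and $|m'|<|n'|$. Let $\phi:\Upsilon^{(0)}_{m,n}\to \Upsilon^{(0)}_{m',n'}$ be a line-preserving bijection. Then $\phi$ maps $a$-lines onto $a$-lines and $t$-lines onto $t$-lines, and the restriction of $\phi$ to each $t$-line preserves the linear order along $t$-lines. Moreover $|m|=|m'|$ and $|n|=|n'|$.
   Context: $\mathrm{BS}(m,n)=\langle a,t\mid ta^mt^{-1}=a^n\rangle$ and $\Upsilon_{m,n}$ is its Cayley graph with respect to $\{a,t\}$, with vertices identified with group elements; each edge $g\to gs$ ($s\in\{a,t\}$) is oriented from $g$ to $gs$ and labeled $s$. A $t$-line (resp. $a$-line) is the subgraph spanned by a left coset $g\langle t\rangle$ (resp. $g\langle a\rangle$); these are the standard lines. Vertices of a standard line are linearly ordered by the orientation of its edges. A bijection $\phi:\Upsilon^{(0)}_{m,n}\to \Upsilon^{(0)}_{m',n'}$ is line-preserving if for every standard line $\ell$ of $\Upsilon_{m,n}$ there is a standard line $\ell'$ of $\Upsilon_{m',n'}$ with $\phi(\ell^{(0)})=(\ell')^{(0)}$. *)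

(* Defs.v *)
(* Baumslag-Solitar groups BS(m,n) = <a,t | t a^m t^-1 = a^n>,
   modelled as words in the generators modulo the congruence generated by the
   group laws and the defining relation (a setoid presentation of the group). *)
From Stdlib Require Import ZArith List.
Import ListNotations.
Open Scope Z_scope.

(* A letter (false, k) stands for a^k, (true, k) stands for t^k.
   A word is the product of its letters from left to right. *)
Definition letter := (bool * Z)%type.
Definition word := list letter.

Definition gen_a : bool := false.
Definition gen_t : bool := true.

Inductive bs_eq (m n : Z) : word -> word -> Prop :=
| bs_refl u : bs_eq m n u u
| bs_sym u v : bs_eq m n u v -> bs_eq m n v u
| bs_trans u v w : bs_eq m n u v -> bs_eq m n v w -> bs_eq m n u w
| bs_cat u u' v v' : bs_eq m n u u' -> bs_eq m n v v' -> bs_eq m n (u ++ v) (u' ++ v')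
| bs_zero b : bs_eq m n [(b, 0)] []
| bs_add b i j : bs_eq m n [(b, i); (b, j)] [(b, i + j)]
| bs_rel : bs_eq m n [(gen_t, 1); (gen_a, m); (gen_t, -1)] [(gen_a, n)].

(* The vertex g s^k on the standard s-line g<s> (s = a if b = false, s = t if
   b = true); k |-> g s^k enumerates that line in the order given by the
   orientation of its edges (g s^k -> g s^(k+1)). *)
Definition line_pt (g : word) (b : bool) (k : Z) : word := g ++ [(b, k)].

Definition well_defined (m n m' n' : Z) (phi : word -> word) : Prop :=
  forall u v, bs_eq m n u v -> bs_eq m' n' (phi u) (phi v).

Definition is_bijection (m n m' n' : Z) (phi : word -> word) : Prop :=
  well_defined m n m' n' phi /\
  (forall u v, bs_eq m' n' (phi u) (phi v) -> bs_eq m n u v) /\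
  (forall w, exists u, bs_eq m' n' (phi u) w).

Definition maps_line_onto (m' n' : Z) (phi : word -> word)
    (g : word) (b : bool) (h : word) (c : bool) : Prop :=
  (forall k, exists l, bs_eq m' n' (phi (line_pt g b k)) (line_pt h c l)) /\
  (forall l, exists k, bs_eq m' n' (phi (line_pt g b k)) (line_pt h c l)).

Definition line_preserving (m n m' n' : Z) (phi : word -> word) : Prop :=
  forall (g : word) (b : bool), exists (h : word) (c : bool),
    maps_line_onto m' n' phi g b h c.

(* Main.v *)
Require Import Defs.
From Stdlib Require Import ZArith List Lia Znumtheory Setoid Morphisms Classical IndefiniteDescription.
Import ListNotations.
Open Scope Z_scope.

Definition nfl := list (Z * bool).
Definition nf := (nfl * Z)%type.

Section NF.
Variables m n : Z.
Hypothesis Hm : m <> 0.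
Hypothesis Hn : n <> 0.

Fixpoint carry (j : Z) (l : nfl) (e : Z) : nf :=
  match l with
  | [] => ([], e + j)
  | (r, b) :: l' =>
      let s := r + j in
      let M := if b then n else m in
      let N := if b then m else n in
      let p := carry (N * (s / M)) l' e in
      ((s mod M, b) :: fst p, snd p)
  end.

Definition acta (j : Z) (x : nf) : nf := carry j (fst x) (snd x).

Definition act_t (x : nf) : nf :=
  match fst x with
  | (Z0, false) :: l => (l, snd x)
  | l => ((0, true) :: l, snd x)
  end.

Definition act_ti (x : nf) : nf :=
  match fst x with
  | (Z0, true) :: l => (l, snd x)
  | l => ((0, false) :: l, snd x)
  end.

Fixpoint validl (l : nfl) : Prop :=
  match l with
  | [] => True
  | (r, b) :: l' => r mod (if b then n else m) = r /\
       match l' with [] => True | (r', b') :: _ => b' <> b -> r' <> 0 end /\ validl l'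
  end.

Definition valid (x : nf) := validl (fst x).

Lemma carry_add : forall l i j e,
  carry i (fst (carry j l e)) (snd (carry j l e)) = carry (i + j) l e.
Proof.
  induction l as [|[r b] l IH]; intros i j e; simpl.
  - f_equal; lia.
  - rewrite IH.
    assert (HM : (if b then n else m) <> 0) by (destruct b; auto).
    set (M := if b then n else m) in *.
    set (N := if b then m else n).
    assert (E1 : ((r + j) mod M + i) mod M = (r + (i + j)) mod M).
    { rewrite Z.add_mod_idemp_l by auto. f_equal; lia. }
    assert (E2 : (r + (i + j)) / M = (r + j) / M + ((r + j) mod M + i) / M).
    { assert (Ed : r + (i + j) = (r + j) / M * M + ((r + j) mod M + i)).
      { pose proof (Z.div_mod (r + j) M HM). lia. }
      rewrite Ed. rewrite Z.div_add_l by auto. reflexivity. }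
    rewrite E1, E2.
    replace (N * (((r + j) mod M + i) / M) + N * ((r + j) / M))
      with (N * ((r + j) / M + ((r + j) mod M + i) / M)) by ring.
    reflexivity.
Qed.

Lemma mod_id_div0 : forall r M, M <> 0 -> r mod M = r -> r / M = 0.
Proof.
  intros r M HM H. pose proof (Z.div_mod r M HM) as E. rewrite H in E.
  assert (M * (r / M) = 0) by lia.
  apply Z.mul_eq_0 in H0. destruct H0; [contradiction|auto].
Qed.

Lemma carry0 : forall l e, validl l -> carry 0 l e = (l, e).
Proof.
  induction l as [|[r b] l IH]; intros e V; simpl.
  - f_equal; lia.
  - destruct V as [V1 [_ V3]].
    assert (HM : (if b then n else m) <> 0) by (destruct b; auto).
    rewrite Z.add_0_r, V1, (mod_id_div0 r _ HM V1), Z.mul_0_r, IH by auto.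
    reflexivity.
Qed.

Lemma carry_fst_cons : forall j r b l e,
  fst (carry j ((r, b) :: l) e) =
  ((r + j) mod (if b then n else m), b) ::
    fst (carry ((if b then m else n) * ((r + j) / (if b then n else m))) l e).
Proof. reflexivity. Qed.

Lemma carry_valid : forall l j e, validl l -> validl (fst (carry j l e)).
Proof.
  induction l as [|[r b] l IH]; intros j e V.
  - simpl; auto.
  - rewrite carry_fst_cons. destruct V as [V1 [V2 V3]].
    assert (HM : (if b then n else m) <> 0) by (destruct b; auto).
    simpl. split; [apply Z.mod_mod; auto|]. split; [|apply IH; auto].
    destruct l as [|[r' b'] l']; [simpl; auto|].
    rewrite carry_fst_cons. intros Hb.
    specialize (V2 Hb).
    destruct V3 as [V31 _].
    destruct b, b'; try congruence; simpl in *.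
    + rewrite Z.mul_comm, Z_mod_plus_full, V31; auto.
    + rewrite Z.mul_comm, Z_mod_plus_full, V31; auto.
Qed.

Lemma acta_valid : forall j x, valid x -> valid (acta j x).
Proof. intros j [l e] V. apply carry_valid; auto. Qed.

Lemma acta_add : forall i j x, acta i (acta j x) = acta (i + j) x.
Proof. intros i j [l e]. unfold acta. simpl. apply carry_add. Qed.

Lemma acta0 : forall x, valid x -> acta 0 x = x.
Proof. intros [l e] V. unfold acta. simpl. apply carry0; auto. Qed.

Lemma act_t_valid : forall x, valid x -> valid (act_t x).
Proof.
  intros [l e] V. unfold valid, act_t in *; simpl in *.
  destruct l as [|[r b] l]; simpl.
  - split; [apply Zmod_0_l|]; auto.
  - destruct r; destruct b; simpl in *; try tauto;
    repeat split; try apply Zmod_0_l; try tauto; try (intros; congruence).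
Qed.

Lemma act_ti_valid : forall x, valid x -> valid (act_ti x).
Proof.
  intros [l e] V. unfold valid, act_ti in *; simpl in *.
  destruct l as [|[r b] l]; simpl.
  - split; [apply Zmod_0_l|]; auto.
  - destruct r; destruct b; simpl in *; try tauto;
    repeat split; try apply Zmod_0_l; try tauto; try (intros; congruence).
Qed.

Lemma t_ti : forall x, valid x -> act_t (act_ti x) = x.
Proof.
  intros [l e] V. unfold valid, act_t, act_ti in *; simpl in *.
  destruct l as [|[r b] l]; simpl; auto.
  destruct r; destruct b; simpl; auto.
  destruct l as [|[r' b'] l']; simpl; auto.
  destruct V as [_ [V2 _]].
  destruct r'; destruct b'; simpl; auto.
  exfalso; apply V2; congruence; auto.
Qed.

Lemma ti_t : forall x, valid x -> act_ti (act_t x) = x.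
Proof.
  intros [l e] V. unfold valid, act_t, act_ti in *; simpl in *.
  destruct l as [|[r b] l]; simpl; auto.
  destruct r; destruct b; simpl; auto.
  destruct l as [|[r' b'] l']; simpl; auto.
  destruct V as [_ [V2 _]].
  destruct r'; destruct b'; simpl; auto.
  exfalso; apply V2; congruence; auto.
Qed.

Definition tpow (k : Z) (x : nf) : nf :=
  if 0 <=? k then Nat.iter (Z.to_nat k) act_t x else Nat.iter (Z.to_nat (- k)) act_ti x.

Lemma iter_t_valid : forall p x, valid x -> valid (Nat.iter p act_t x).
Proof. induction p; intros; simpl; auto. apply act_t_valid; auto. Qed.
Lemma iter_ti_valid : forall p x, valid x -> valid (Nat.iter p act_ti x).
Proof. induction p; intros; simpl; auto. apply act_ti_valid; auto. Qed.

Lemma tpow_valid : forall k x, valid x -> valid (tpow k x).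
Proof.
  intros k x V. unfold tpow. destruct (0 <=? k).
  apply iter_t_valid; auto. apply iter_ti_valid; auto.
Qed.

Lemma tpow_succ : forall k x, valid x -> tpow (k + 1) x = act_t (tpow k x).
Proof.
  intros k x V. unfold tpow.
  destruct (Z.leb_spec 0 k).
  - rewrite (proj2 (Z.leb_le 0 (k+1))) by lia.
    replace (Z.to_nat (k + 1)) with (S (Z.to_nat k)) by lia. reflexivity.
  - destruct (Z.eq_dec k (-1)).
    + subst. simpl. rewrite t_ti; auto.
    + rewrite (proj2 (Z.leb_gt 0 (k+1))) by lia.
      replace (Z.to_nat (- k)) with (S (Z.to_nat (- (k + 1)))) by lia.
      simpl. rewrite t_ti; auto. apply iter_ti_valid; auto.
Qed.

Lemma tpow0 : forall x, tpow 0 x = x.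
Proof. reflexivity. Qed.

Lemma tpow_pred : forall k x, valid x -> tpow (k - 1) x = act_ti (tpow k x).
Proof.
  intros k x V. replace k with ((k - 1) + 1) at 2 by ring.
  rewrite tpow_succ by auto. rewrite ti_t; auto. apply tpow_valid; auto.
Qed.

Lemma tpow_add : forall i j x, valid x -> tpow (i + j) x = tpow i (tpow j x).
Proof.
  intro i. pattern i. apply Z.peano_ind; clear i.
  - intros; reflexivity.
  - intros i IH j x V. replace (Z.succ i + j) with ((i + j) + 1) by lia.
    rewrite tpow_succ, IH by auto. rewrite <- tpow_succ. f_equal.
    apply tpow_valid; auto.
  - intros i IH j x V. replace (Z.pred i + j) with ((i + j) - 1) by lia.
    rewrite tpow_pred, IH by auto. replace (Z.pred i) with (i - 1) by lia.
    rewrite tpow_pred; auto. apply tpow_valid; auto.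
Qed.

Ltac msimp m n Hm Hn := repeat (simpl; rewrite ?Z_mod_same_full, ?(Z.div_same m Hm), ?(Z.div_same n Hn), ?Z.mul_1_r, ?Z.add_0_l).

Lemma rel_ok : forall x, valid x -> act_t (acta m (act_ti x)) = acta n x.
Proof.
  intros [l e] V. unfold valid in V; simpl in V.
  destruct l as [|[r b] l].
  - unfold act_ti, act_t, acta. msimp m n Hm Hn. reflexivity.
  - destruct (Z.eq_dec r 0) as [Er|Er]; [subst r; destruct b|].
    +
      unfold act_ti; simpl. unfold acta. msimp m n Hm Hn.
      unfold act_t. simpl fst.
      destruct V as [_ [V2 V3]].
      destruct l as [|[r' b'] l']; simpl; [reflexivity|].
      destruct b'.
      * destruct ((r' + m) mod n); reflexivity.
      * assert (r' <> 0) by (apply V2; congruence).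
        destruct V3 as [V31 _]. simpl in V31.
        assert (E : (r' + m) mod m = r') by
          (replace (r' + m) with (r' + 1 * m) by ring; rewrite Z_mod_plus_full; auto).
        rewrite E.
        destruct r'; try congruence; reflexivity.
    +
      unfold act_ti; simpl. unfold acta. msimp m n Hm Hn.
      unfold act_t; simpl. reflexivity.
    + destruct r as [|p|p]; [congruence| |]; destruct b; unfold act_ti; simpl;
      unfold acta; msimp m n Hm Hn; unfold act_t; simpl; reflexivity.
Qed.

Definition act_letter (lt : letter) (x : nf) : nf :=
  let (b, k) := lt in if b then tpow k x else acta k x.

Definition act (w : word) (x : nf) : nf := fold_right act_letter x w.

Lemma act_app : forall u v x, act (u ++ v) x = act u (act v x).
Proof. intros. unfold act. apply fold_right_app. Qed.

Lemma act_valid : forall w x, valid x -> valid (act w x).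
Proof.
  induction w as [|[b k] w IH]; intros x V; simpl; auto.
  destruct b. apply tpow_valid; auto. apply acta_valid; auto.
Qed.

Lemma act_sound : forall u v, bs_eq m n u v -> forall x, valid x -> act u x = act v x.
Proof.
  intros u v H. induction H; intros x V.
  - reflexivity.
  - symmetry; auto.
  - rewrite IHbs_eq1, IHbs_eq2; auto.
  - rewrite !act_app. rewrite IHbs_eq2 by auto. apply IHbs_eq1. apply act_valid; auto.
  - simpl. destruct b; [reflexivity|]. apply acta0; auto.
  - simpl. destruct b.
    + rewrite <- tpow_add; auto.
    + rewrite acta_add; auto.
  - simpl. unfold gen_t, gen_a. simpl.
    change (tpow 1 (acta m (tpow (-1) x))) with (act_t (acta m (act_ti x))).
    apply rel_ok; auto.
Qed.

Definition nfw (w : word) : nf := act w ([], 0).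

Lemma nfw_sound : forall u v, bs_eq m n u v -> nfw u = nfw v.
Proof. intros. apply act_sound; auto. unfold valid; simpl; auto. Qed.

End NF.

#[global] Instance E_equiv (m n : Z) : Equivalence (bs_eq m n).
Proof. split. intro; apply bs_refl. intros x y; apply bs_sym. intros x y z; apply bs_trans. Qed.

#[global] Instance E_app_proper (m n : Z) : Proper (bs_eq m n ==> bs_eq m n ==> bs_eq m n) (@app letter).
Proof. intros u u' Hu v v' Hv. apply bs_cat; auto. Qed.

Definition A (k : Z) : word := [(gen_a, k)].
Definition T (k : Z) : word := [(gen_t, k)].
Arguments A : simpl never.
Arguments T : simpl never.
Definition inv (w : word) : word := rev (map (fun l => (fst l, - snd l)) w).
Fixpoint tau (w : word) : Z :=
  match w with [] => 0 | (b, k) :: w' => (if b then k else 0) + tau w' end.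
Fixpoint zpow (z : Z) (k : nat) : Z := match k with O => 1 | S k => z * zpow z k end.

Section G.
Variables m n : Z.
Hypothesis Hm : m <> 0.
Hypothesis Hn : n <> 0.

Local Notation E := (bs_eq m n).


Lemma pw_add : forall b i j, E ([(b, i)] ++ [(b, j)]) [(b, i + j)].
Proof. intros. apply bs_add. Qed.
Lemma pw0 : forall b, E [(b, 0)] [].
Proof. intros. apply bs_zero. Qed.

Lemma pw_cancel : forall b i, E ([(b, i)] ++ [(b, - i)]) [].
Proof. intros. rewrite pw_add. replace (i + - i) with 0 by ring. apply pw0. Qed.
Lemma pw_cancel' : forall b i, E ([(b, - i)] ++ [(b, i)]) [].
Proof. intros. rewrite pw_add. replace (- i + i) with 0 by ring. apply pw0. Qed.

Lemma inv_cons : forall b k w, inv ((b, k) :: w) = inv w ++ [(b, - k)].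
Proof. intros. unfold inv. simpl. reflexivity. Qed.

Lemma inv_r : forall w, E (w ++ inv w) [].
Proof.
  induction w as [|[b k] w IH]; [reflexivity|].
  rewrite inv_cons.
  transitivity ([(b, k)] ++ (w ++ inv w) ++ [(b, - k)]).
  { simpl. rewrite app_assoc. reflexivity. }
  rewrite IH. simpl. apply pw_cancel.
Qed.

Lemma inv_l : forall w, E (inv w ++ w) [].
Proof.
  induction w as [|[b k] w IH]; [reflexivity|].
  rewrite inv_cons.
  transitivity (inv w ++ ([(b, - k)] ++ [(b, k)]) ++ w).
  { rewrite <- !app_assoc. reflexivity. }
  rewrite pw_cancel'. simpl. exact IH.
Qed.

Lemma cancel_l : forall u v w, E (u ++ v) (u ++ w) -> E v w.
Proof.
  intros u v w H.
  transitivity ((inv u ++ u) ++ v). rewrite inv_l; reflexivity.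
  rewrite <- app_assoc, H, app_assoc, inv_l. reflexivity.
Qed.

Lemma cancel_r : forall u v w, E (v ++ u) (w ++ u) -> E v w.
Proof.
  intros u v w H.
  transitivity (v ++ (u ++ inv u)). rewrite inv_r, app_nil_r; reflexivity.
  rewrite app_assoc, H, <- app_assoc, inv_r, app_nil_r. reflexivity.
Qed.

Lemma tau_app : forall u v, tau (u ++ v) = tau u + tau v.
Proof. induction u as [|[b k] u IH]; intros; simpl; [ring|]. rewrite IH; ring. Qed.

Lemma tau_sound : forall u v, E u v -> tau u = tau v.
Proof.
  intros u v H; induction H; simpl; try lia;
  try (rewrite !tau_app; lia); try (destruct b; lia).
Qed.

Lemma a_triv : forall k, E (A k) [] -> k = 0.
Proof.
  intros k H. apply nfw_sound in H; auto. unfold nfw, act, A in H. simpl in H.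
  injection H; lia.
Qed.

Lemma a_inj : forall i j, E (A i) (A j) -> i = j.
Proof.
  intros i j H. apply nfw_sound in H; auto. unfold nfw, act, A in H. simpl in H.
  injection H; lia.
Qed.

Lemma t_inj : forall i j, E (T i) (T j) -> i = j.
Proof. intros i j H. apply tau_sound in H. simpl in H. lia. Qed.

Lemma a_t : forall i k, E (A i) (T k) -> i = 0 /\ k = 0.
Proof.
  intros i k H. assert (k = 0) by (apply tau_sound in H; simpl in H; lia). subst.
  split; auto. apply a_triv. rewrite H. apply pw0.
Qed.

Lemma iter_t_nil : forall p, Nat.iter p (act_t) ([], 0) = (repeat (0, true) p, 0).
Proof.
  induction p; simpl; auto. rewrite IHp. unfold act_t. simpl.
  destruct p; reflexivity.
Qed.
Lemma iter_ti_nil : forall p, Nat.iter p (act_ti) ([], 0) = (repeat (0, false) p, 0).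
Proof.
  induction p; simpl; auto. rewrite IHp. unfold act_ti. simpl.
  destruct p; reflexivity.
Qed.

Definition headnot (b0 : bool) (x : nf) : Prop :=
  match fst x with [] => False | (r, b) :: _ => ~ (r = 0 /\ b = b0) end.

Lemma iter_ti_headnot : forall p x, headnot true x -> headnot true (Nat.iter p act_ti x).
Proof.
  induction p; intros x H; simpl; auto.
  specialize (IHp x H). revert IHp. generalize (Nat.iter p act_ti x).
  intros [l e] Hy. unfold headnot, act_ti in *. simpl in *.
  destruct l as [|[r b] l]; [contradiction|].
  destruct r; destruct b; simpl; try (intros [? ?]; congruence).
  exfalso; apply Hy; auto.
Qed.

Lemma iter_t_headnot : forall p x, headnot false x -> headnot false (Nat.iter p act_t x).
Proof.
  induction p; intros x H; simpl; auto.
  specialize (IHp x H). revert IHp. generalize (Nat.iter p act_t x).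
  intros [l e] Hy. unfold headnot, act_t in *. simpl in *.
  destruct l as [|[r b] l]; [contradiction|].
  destruct r; destruct b; simpl; try (intros [? ?]; congruence).
  exfalso; apply Hy; auto.
Qed.

Lemma britton : forall q i j, E [(gen_t, - q); (gen_a, i); (gen_t, q)] (A j) ->
  (q > 0 -> (n | i)) /\ (q < 0 -> (m | i)).
Proof.
  intros q i j H. apply nfw_sound in H; auto.
  unfold nfw, act, A in H. simpl in H. unfold gen_t, gen_a in H.
  split; intro Hq.
  - unfold tpow at 2 in H.
    rewrite (proj2 (Z.leb_le 0 q)) in H by lia.
    replace (Z.to_nat q) with (S (Z.to_nat q - 1)) in H by lia.
    rewrite iter_t_nil in H. simpl in H.
    destruct (Z.eq_dec (i mod n) 0) as [E0|E0].
    + apply Z.mod_divide; auto.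
    + exfalso. unfold tpow in H. rewrite (proj2 (Z.leb_gt 0 (-q))) in H by lia.
      set (x := acta m n i ((0, true) :: repeat (0, true) (Z.to_nat q - 1), 0)) in H.
      assert (Hx : headnot true x).
      { unfold x, headnot, acta. simpl. intros [? _]. apply E0. rewrite <- H0. f_equal. }
      pose proof (iter_ti_headnot (Z.to_nat (- - q)) x Hx) as HH.
      rewrite H in HH. simpl in HH. exact HH.
  - unfold tpow at 2 in H.
    rewrite (proj2 (Z.leb_gt 0 q)) in H by lia.
    replace (Z.to_nat (- q)) with (S (Z.to_nat (- q) - 1)) in H by lia.
    rewrite iter_ti_nil in H. simpl in H.
    destruct (Z.eq_dec (i mod m) 0) as [E0|E0].
    + apply Z.mod_divide; auto.
    + exfalso. unfold tpow in H. rewrite (proj2 (Z.leb_le 0 (-q))) in H by lia.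
      set (x := acta m n i ((0, false) :: repeat (0, false) (Z.to_nat (- q) - 1), 0)) in H.
      assert (Hx : headnot false x).
      { unfold x, headnot, acta. simpl. intros [? _]. apply E0. rewrite <- H0. f_equal. }
      pose proof (iter_t_headnot (Z.to_nat (- q)) x Hx) as HH.
      rewrite H in HH. simpl in HH. exact HH.
Qed.

End G.

Section R.
Variables m n : Z.
Hypothesis Hm : m <> 0.
Hypothesis Hn : n <> 0.
Local Notation E := (bs_eq m n).

Lemma A_add : forall i j, E (A i ++ A j) (A (i + j)).
Proof. intros; apply bs_add. Qed.
Lemma T_add : forall i j, E (T i ++ T j) (T (i + j)).
Proof. intros; apply bs_add. Qed.
Lemma A0 : E (A 0) [].
Proof. apply bs_zero. Qed.
Lemma T0 : E (T 0) [].
Proof. apply bs_zero. Qed.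
Lemma TT : forall i, E (T (- i) ++ T i) [].
Proof. intros. rewrite T_add. replace (- i + i) with 0 by ring. apply T0. Qed.
Lemma TT' : forall i, E (T i ++ T (- i)) [].
Proof. intros. rewrite T_add. replace (i + - i) with 0 by ring. apply T0. Qed.
Lemma AA : forall i, E (A (- i) ++ A i) [].
Proof. intros. rewrite A_add. replace (- i + i) with 0 by ring. apply A0. Qed.
Lemma AA' : forall i, E (A i ++ A (- i)) [].
Proof. intros. rewrite A_add. replace (i + - i) with 0 by ring. apply A0. Qed.

Lemma TT1 : E (T (-1) ++ T 1) [].
Proof. rewrite T_add. change (-1 + 1) with 0. apply T0. Qed.
Lemma TT1' : E (T 1 ++ T (-1)) [].
Proof. rewrite T_add. change (1 + -1) with 0. apply T0. Qed.

Lemma ins : forall u v w, E w [] -> E (u ++ v) (u ++ w ++ v).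
Proof. intros u v w H. rewrite H. reflexivity. Qed.

Lemma rel0 : E (T 1 ++ A m ++ T (-1)) (A n).
Proof. apply bs_rel. Qed.

Lemma conj_nat : forall p : nat, E (T 1 ++ A (m * Z.of_nat p) ++ T (-1)) (A (n * Z.of_nat p)).
Proof.
  induction p.
  - change (Z.of_nat 0) with 0. rewrite !Z.mul_0_r, A0, app_nil_l, T_add. change (1 + -1) with 0. rewrite T0. reflexivity.
  - rewrite Nat2Z.inj_succ. replace (m * Z.succ (Z.of_nat p)) with (m * Z.of_nat p + m) by ring.
    replace (n * Z.succ (Z.of_nat p)) with (n * Z.of_nat p + n) by ring.
    rewrite <- !A_add. rewrite <- IHp, <- rel0.
    rewrite <- !app_assoc.
    rewrite (ins (T 1 ++ A (m * Z.of_nat p)) (A m ++ T (-1)) (T (-1) ++ T 1)) by apply TT1.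
    rewrite <- !app_assoc. reflexivity.
Qed.

Lemma conj_rel : forall x, E (T 1 ++ A (m * x) ++ T (-1)) (A (n * x)).
Proof.
  intros x. destruct (Z_le_gt_dec 0 x).
  - replace x with (Z.of_nat (Z.to_nat x)) by lia. apply conj_nat.
  - pose proof (conj_nat (Z.to_nat (- x))) as H.
    replace (Z.of_nat (Z.to_nat (- x))) with (- x) in H by lia.
    apply (cancel_r m n (A (n * - x))).
    rewrite A_add. replace (n * x + n * - x) with 0 by ring. rewrite A0.
    rewrite <- H. rewrite <- !app_assoc.
    rewrite (app_assoc (T (-1)) (T 1)), TT1, app_nil_l.
    rewrite (app_assoc (A (m * x))), A_add. replace (m * x + m * - x) with 0 by ring.
    rewrite A0, app_nil_l. apply TT1'.
Qed.

Lemma push_t : forall x, E (A (n * x) ++ T 1) (T 1 ++ A (m * x)).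
Proof.
  intros x. rewrite <- conj_rel. rewrite <- !app_assoc. rewrite TT1. rewrite app_nil_r. reflexivity.
Qed.

Lemma push_ti : forall x, E (A (m * x) ++ T (-1)) (T (-1) ++ A (n * x)).
Proof.
  intros x. rewrite <- conj_rel. rewrite !app_assoc. rewrite TT1, app_nil_l. reflexivity.
Qed.

Lemma push_tk : forall k x, E (A (zpow n k * x) ++ T (Z.of_nat k)) (T (Z.of_nat k) ++ A (zpow m k * x)).
Proof.
  induction k; intros x.
  - change (Z.of_nat 0) with 0. change (- 0) with 0. simpl zpow. rewrite T0, !app_nil_r, ?app_nil_l. f_equiv; f_equal; ring.
  - rewrite Nat2Z.inj_succ. rewrite <- Z.add_1_l, <- T_add. simpl zpow.
    rewrite app_assoc. replace (n * zpow n k * x) with (n * (zpow n k * x)) by ring.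
    rewrite push_t. rewrite <- app_assoc.
    replace (m * (zpow n k * x)) with (zpow n k * (m * x)) by ring.
    rewrite IHk. rewrite app_assoc, T_add. apply bs_cat; [reflexivity| unfold A; f_equiv; f_equal; ring].
Qed.

Lemma push_tik : forall k x, E (A (zpow m k * x) ++ T (- Z.of_nat k)) (T (- Z.of_nat k) ++ A (zpow n k * x)).
Proof.
  induction k; intros x.
  - change (Z.of_nat 0) with 0. change (- 0) with 0. simpl zpow. rewrite T0, !app_nil_r, ?app_nil_l. f_equiv; f_equal; ring.
  - rewrite Nat2Z.inj_succ. replace (- Z.succ (Z.of_nat k)) with (-1 + - Z.of_nat k) by lia.
    rewrite <- T_add. simpl zpow.
    rewrite app_assoc. replace (m * zpow m k * x) with (m * (zpow m k * x)) by ring.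
    rewrite push_ti. rewrite <- app_assoc.
    replace (n * (zpow m k * x)) with (zpow m k * (n * x)) by ring.
    rewrite IHk. rewrite app_assoc, T_add. apply bs_cat; [reflexivity| unfold A; f_equiv; f_equal; ring].
Qed.

Lemma conj_k : forall g u w, m = g * u -> n = g * w ->
  forall k v, E (T (Z.of_nat k) ++ A (g * zpow u k * v) ++ T (- Z.of_nat k)) (A (g * zpow w k * v)).
Proof.
  intros g u w Hu Hw. induction k; intros v.
  - change (Z.of_nat 0) with 0. simpl zpow. rewrite Z.opp_0, T0, app_nil_l, app_nil_r. reflexivity.
  - rewrite Nat2Z.inj_succ. rewrite <- Z.add_1_r at 1.
    replace (- Z.succ (Z.of_nat k)) with (-1 + - Z.of_nat k) by lia.
    rewrite <- !T_add. simpl zpow.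
    replace (g * (u * zpow u k) * v) with (m * (zpow u k * v)) by (rewrite Hu; ring).
    transitivity (T (Z.of_nat k) ++ (T 1 ++ A (m * (zpow u k * v)) ++ T (-1)) ++ T (- Z.of_nat k)).
    { rewrite <- !app_assoc. reflexivity. }
    rewrite conj_rel. replace (n * (zpow u k * v)) with (g * zpow u k * (w * v)) by (rewrite Hw; ring).
    rewrite IHk. unfold A; f_equiv; f_equal; ring.
Qed.

End R.

Definition on (m n : Z) (x g : word) (b : bool) : Prop := exists k, bs_eq m n x (g ++ [(b, k)]).

Section Geo.
Variables m n : Z.
Hypothesis Hm : m <> 0.
Hypothesis Hn : n <> 0.
Local Notation E := (bs_eq m n).
Local Notation on := (on m n).

Lemma on_resp : forall x y g b, E x y -> on x g b -> on y g b.
Proof. intros x y g b H [k Hk]. exists k. rewrite <- H. auto. Qed.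

Lemma on_resp_g : forall x g h b, E g h -> on x g b -> on x h b.
Proof. intros x g h b H [k Hk]. exists k. rewrite <- H. auto. Qed.

Lemma on_pt : forall g b k, on (g ++ [(b, k)]) g b.
Proof. intros. exists k. reflexivity. Qed.

Lemma on_base : forall g b, on g g b.
Proof. intros. exists 0. rewrite bs_zero, app_nil_r. reflexivity. Qed.

Lemma on_trans : forall x y g b, on x g b -> on y x b -> on y g b.
Proof.
  intros x y g b [k Hk] [l Hl]. exists (k + l).
  rewrite Hl, Hk, <- app_assoc. apply bs_cat; [reflexivity|apply bs_add].
Qed.

Lemma on_sym : forall x g b, on x g b -> on g x b.
Proof.
  intros x g b [k Hk]. exists (- k). rewrite Hk, <- app_assoc.
  transitivity (g ++ []). rewrite app_nil_r; reflexivity.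
  apply bs_cat; [reflexivity|]. symmetry. change ([(b, k)] ++ [(b, - k)]) with [(b, k); (b, - k)]. rewrite bs_add. replace (k + - k) with 0 by ring. apply bs_zero.
Qed.

Lemma same_line : forall x y g h b, on x g b -> on x h b -> on y g b -> on y h b.
Proof.
  intros x y g h b H1 H2 H3. apply on_trans with x; auto.
  apply on_trans with g; auto. apply on_sym; auto.
Qed.

Lemma on_pt_iff : forall x g b k, on x g b <-> on x (g ++ [(b, k)]) b.
Proof.
  intros x g b k. split; intro H.
  - apply same_line with g g; auto using on_base. apply on_sym, on_pt.
  - apply on_trans with (g ++ [(b, k)]); auto. apply on_pt.
Qed.

Lemma on_a_eq : forall x c, on (x ++ A c) x true -> c = 0.
Proof.
  intros x c [k Hk]. apply (cancel_l m n) in Hk. apply a_t in Hk; auto. tauto.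
Qed.

Lemma a_t_uniq : forall x y g h, on x g false -> on x h true -> on y g false -> on y h true -> E x y.
Proof.
  intros x y g h H1 H2 H3 H4.
  assert (Ha : on y x false) by (apply on_trans with g; auto; apply on_sym; auto).
  assert (Ht : on y x true) by (apply on_trans with h; auto; apply on_sym; auto).
  destruct Ha as [i Hi]. destruct Ht as [j Hj].
  assert (E (x ++ A i) (x ++ T j)) by (rewrite <- Hi, <- Hj; reflexivity).
  apply (cancel_l m n) in H. apply a_t in H; auto. destruct H; subst.
  rewrite Hi. unfold A. rewrite bs_zero, app_nil_r. reflexivity.
Qed.

Lemma set_type : forall h1 c1 h2 c2, (forall q, on q h1 c1 <-> on q h2 c2) -> c1 = c2.
Proof.
  intros h1 c1 h2 c2 H. destruct (Bool.bool_dec c1 c2) as [|Hc]; auto. exfalso.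
  assert (P1 : on h1 h2 c2) by (apply H, on_base).
  assert (P2 : on (h1 ++ [(c1, 1)]) h2 c2) by (apply H, on_pt).
  assert (Q1 : on h1 h1 c1) by apply on_base.
  assert (Q2 : on (h1 ++ [(c1, 1)]) h1 c1) by apply on_pt.
  assert (Ee : E h1 (h1 ++ [(c1, 1)])).
  { destruct c1, c2; try congruence.
    - apply a_t_uniq with h2 h1; auto.
    - apply a_t_uniq with h1 h2; auto. }
  assert (E2 : E (h1 ++ []) (h1 ++ [(c1, 1)])) by (rewrite app_nil_r; auto).
  apply (cancel_l m n) in E2. symmetry in E2. destruct c1.
  - apply tau_sound in E2. simpl in E2. lia.
  - apply (a_triv m n Hm Hn) in E2. lia.
Qed.

Lemma tau_on_a : forall x h, on x h false -> tau x = tau h.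
Proof. intros x h [k Hk]. apply tau_sound in Hk. rewrite tau_app in Hk. simpl in Hk. lia. Qed.

Lemma tau_T : forall g k, tau (g ++ T k) = tau g + k.
Proof. intros. rewrite tau_app. unfold T. simpl. unfold gen_t. ring. Qed.

Lemma tau_A : forall g k, tau (g ++ A k) = tau g.
Proof. intros. rewrite tau_app. unfold A. simpl. unfold gen_a. ring. Qed.

Lemma QT : forall z k, k <> 0 -> exists c, c <> 0 /\ on (z ++ A c ++ T k) (z ++ T k) false.
Proof.
  intros z k Hk. destruct (Z_le_gt_dec 0 k).
  - exists (zpow n (Z.to_nat k) * 1). split.
    + assert (forall p, zpow n p <> 0) by (induction p; simpl; lia). specialize (H (Z.to_nat k)). lia.
    + exists (zpow m (Z.to_nat k) * 1).
      pose proof (push_tk m n (Z.to_nat k) 1) as H. rewrite Z2Nat.id in H by lia.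
      rewrite H, <- app_assoc. reflexivity.
  - exists (zpow m (Z.to_nat (- k)) * 1). split.
    + assert (forall p, zpow m p <> 0) by (induction p; simpl; lia). specialize (H (Z.to_nat (- k))). lia.
    + exists (zpow n (Z.to_nat (- k)) * 1).
      pose proof (push_tik m n (Z.to_nat (- k)) 1) as H. rewrite Z2Nat.id in H by lia.
      rewrite Z.opp_involutive in H.
      rewrite H, <- app_assoc. reflexivity.
Qed.

Lemma conj_in_A : forall q i s, E (T (- q) ++ A i ++ T q) (A s) ->
  (q > 0 -> (n | i)) /\ (q < 0 -> (m | i)).
Proof. intros q i s H. apply (britton m n Hm Hn q i s). exact H. Qed.

Lemma conjA_of : forall x q i s, E (x ++ A i ++ T q) (x ++ T q ++ A s) ->
  E (T (- q) ++ A i ++ T q) (A s).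
Proof.
  intros x q i s H. apply (cancel_l m n) in H.
  rewrite H, app_assoc. rewrite T_add. replace (- q + q) with 0 by ring. rewrite T0. reflexivity.
Qed.

Lemma QAfail : Z.abs m >= 2 -> Z.abs n >= 2 ->
  forall x y z, on x z true -> on y (z ++ A 1) true -> on y x false -> on x z false.
Proof.
  intros H2m H2n x y z [q Hq] [s Hs] [r Hr].
  assert (Hq' : E x (z ++ T q)) by exact Hq. clear Hq.
  assert (Hs' : E y ((z ++ A 1) ++ T s)) by exact Hs. clear Hs.
  assert (Hr' : E y (x ++ A r)) by exact Hr. clear Hr.
  assert (H : E (z ++ A 1 ++ T s) (z ++ T q ++ A r)).
  { rewrite app_assoc, <- Hs', Hr', Hq', <- app_assoc. reflexivity. }
  assert (Eqs : s = q).
  { apply tau_sound in H. rewrite !tau_app in H. unfold A, T in H. simpl in H. unfold gen_t, gen_a in H. lia. }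
  subst s. apply conjA_of in H. apply conj_in_A in H. destruct H as [H1 H2].
  destruct (Z.lt_trichotomy q 0) as [Hlt|[Heq|Hgt]].
  - specialize (H2 Hlt). apply Z.divide_1_r in H2. lia.
  - subst q. exists 0. rewrite Hq'. unfold T. rewrite !bs_zero. reflexivity.
  - specialize (H1 ltac:(lia)). apply Z.divide_1_r in H1. lia.
Qed.

Lemma RAfail : Z.abs n >= 2 ->
  forall x y, on x [] false -> on y (T (-1) ++ A 1 ++ T 1) false -> on y x true -> False.
Proof.
  intros H2n x y [i Hi] [j Hj] [k Hk].
  assert (H : E ((T (-1) ++ A 1 ++ T 1) ++ A j) (A i ++ T k)).
  { transitivity y. symmetry; exact Hj. rewrite Hk, Hi. reflexivity. }
  assert (k = 0).
  { apply tau_sound in H. rewrite !tau_app in H. unfold A, T in H. simpl in H. unfold gen_t, gen_a in H. lia. }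
  subst k. unfold T at 3 in H. rewrite bs_zero, app_nil_r in H.
  assert (H' : E (T (-1) ++ A 1 ++ T 1) (A (i - j))).
  { apply (cancel_r m n (A j)). rewrite H. rewrite A_add. unfold A; f_equiv; f_equal; ring. }
  destruct (conj_in_A 1 1 (i - j) H') as [H1 _]. specialize (H1 ltac:(lia)).
  apply Z.divide_1_r in H1. lia.
Qed.

End Geo.

Section Geo2.
Variables m n : Z.
Hypothesis Hm : m <> 0.
Hypothesis Hn : n <> 0.
Local Notation E := (bs_eq m n).
Local Notation on := (on m n).

Lemma zpow_1 : forall p, zpow 1 p = 1.
Proof. induction p; cbn [zpow]; lia. Qed.

Lemma zpow_sq : forall z p, z * z = 1 -> zpow z p * zpow z p = 1.
Proof.
  intros z p Hz. induction p; cbn [zpow]; [lia|].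
  replace (z * zpow z p * (z * zpow z p)) with ((z * z) * (zpow z p * zpow z p)) by ring.
  rewrite Hz, IHp. ring.
Qed.

Lemma Tsplit : forall i j, E (T (i + j)) (T i ++ T j).
Proof. intros. symmetry. apply (T_add m n). Qed.
Lemma Asplit : forall i j, E (A (i + j)) (A i ++ A j).
Proof. intros. symmetry. apply (A_add m n). Qed.

Lemma rep : m * m = 1 -> forall w, exists i k j, E w (T i ++ A k ++ T j).
Proof.
  intros Hmm. induction w as [|[b c] w IH].
  - exists 0, 0, 0. rewrite (T0 m n), (A0 m n). reflexivity.
  - destruct IH as [i [k [j Hw]]].
    assert (Hw' : E ((b, c) :: w) ([(b, c)] ++ T i ++ A k ++ T j)).
    { change ((b, c) :: w) with ([(b, c)] ++ w). rewrite Hw. reflexivity. }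
    destruct b.
    + exists (c + i), k, j. rewrite Hw'. change [(true, c)] with (T c). rewrite app_assoc, (T_add m n). reflexivity.
    + destruct (Z_le_gt_dec i 0).
      * set (p := Z.to_nat (- i)).
        pose proof (push_tik m n p (zpow m p * c)) as Hp.
        replace (zpow m p * (zpow m p * c)) with c in Hp
          by (rewrite Z.mul_assoc, zpow_sq; auto; ring).
        replace (Z.of_nat p) with (- i) in Hp by (unfold p; lia).
        rewrite Z.opp_involutive in Hp.
        exists i, (zpow n p * (zpow m p * c) + k), j.
        rewrite Hw'. change [(false, c)] with (A c). rewrite app_assoc, Hp, <- app_assoc, (app_assoc (A _)), (A_add m n). reflexivity.
      * set (p := Z.to_nat i).
        assert (Hc : m * zpow 1 p * (m * k) = k) by (rewrite zpow_1; replace (m * 1 * (m * k)) with (m * m * k) by ring; rewrite Hmm; ring).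
        pose proof (conj_k m n m 1 (n * m) ltac:(ring) ltac:(replace (m * (n * m)) with (n * (m * m)) by ring; rewrite Hmm; ring) p (m * k)) as Hp.
        rewrite Hc in Hp. replace (Z.of_nat p) with i in Hp by (unfold p; lia).
        exists 0, (c + m * zpow (n * m) p * (m * k)), (i + j).
        rewrite Hw'. change [(false, c)] with (A c). rewrite (T0 m n).
 rewrite app_nil_l.
 rewrite <- (A_add m n).
 rewrite <- Hp.
 rewrite <- (T_add m n).
        rewrite <- !app_assoc. rewrite (app_assoc (T (- i))), (TT m n), app_nil_l. reflexivity.
Qed.

Lemma RT : m * m = 1 -> forall u1 u2, exists x y, on x u1 true /\ on y u2 true /\ on y x false.
Proof.
  intros Hmm u1 u2. destruct (rep Hmm (inv u1 ++ u2)) as [i [k [j H]]].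
  exists (u1 ++ T i), (u2 ++ T (- j)). split; [apply on_pt|]. split; [apply on_pt|].
  exists k.
  assert (Hu2 : E u2 (u1 ++ T i ++ A k ++ T j)).
  { rewrite <- H. rewrite app_assoc, (inv_r m n); auto. reflexivity. }
  rewrite Hu2. rewrite <- !app_assoc. rewrite (TT' m n), app_nil_r. reflexivity.
Qed.

Lemma conj_step : forall q c, E (T (- (q + 1)) ++ A (n * c) ++ T (q + 1)) (T (- q) ++ A (m * c) ++ T q).
Proof.
  intros q c. replace (- (q + 1)) with (- q + -1) by ring. replace (q + 1) with (1 + q) by ring.
  rewrite (Tsplit (- q) (-1)), (Tsplit 1 q). rewrite <- !app_assoc.
  rewrite (app_assoc (A (n * c))), (push_t m n). rewrite <- !app_assoc.
  rewrite (app_assoc (T (-1))), (TT1 m n), app_nil_l. reflexivity.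
Qed.

Lemma Hmono : forall k : nat, forall i s, E (T (- Z.of_nat k) ++ A i ++ T (Z.of_nat k)) (A s) ->
  forall jj : nat, (jj <= k)%nat -> exists s', E (T (- Z.of_nat jj) ++ A i ++ T (Z.of_nat jj)) (A s').
Proof.
  induction k; intros i s H jj Hjj.
  - assert (jj = 0%nat) by lia. subst. exists s. exact H.
  - destruct (britton m n Hm Hn (Z.of_nat (S k)) i s H) as [H1 _].
    destruct (H1 ltac:(lia)) as [c Hc]. subst i.
    rewrite Z.mul_comm in H.
    rewrite Nat2Z.inj_succ, <- Z.add_1_r, conj_step in H.
    destruct jj as [|jj].
    + exists (c * n). change (Z.of_nat 0) with 0. rewrite Z.opp_0, (T0 m n), app_nil_l, app_nil_r. reflexivity.
    + destruct (IHk (m * c) s H jj ltac:(lia)) as [s' Hs'].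
      exists s'. rewrite Nat2Z.inj_succ, <- Z.add_1_r, Z.mul_comm, conj_step. exact Hs'.
Qed.

Lemma MidA : forall g x i l j, i < l < j ->
  on x (g ++ T i) false -> on (x ++ T (j - i)) (g ++ T j) false -> on (x ++ T (l - i)) (g ++ T l) false.
Proof.
  intros g x i l j Hl [s1 H1] [s2 H2].
  change [(false, s1)] with (A s1) in H1. change [(false, s2)] with (A s2) in H2.
  rewrite H1 in H2.
  assert (H3 : E (g ++ T i ++ A s1 ++ T (j - i)) (g ++ T i ++ T (j - i) ++ A s2)).
  { rewrite <- !app_assoc in H2. rewrite H2. rewrite (app_assoc (T i)), (T_add m n).
    replace (i + (j - i)) with j by ring. reflexivity. }
  rewrite app_assoc, (app_assoc g (T i)) in H3. apply conjA_of in H3; auto.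
  pose proof (Hmono (Z.to_nat (j - i)) s1 s2) as HM.
  rewrite Z2Nat.id in HM by lia. specialize (HM H3 (Z.to_nat (l - i)) ltac:(lia)).
  destruct HM as [s3 Hs3]. rewrite Z2Nat.id in Hs3 by lia.
  exists s3. change [(false, s3)] with (A s3).
  rewrite H1, <- !app_assoc.
  transitivity (g ++ T i ++ T (l - i) ++ (T (- (l - i)) ++ A s1 ++ T (l - i))).
  { rewrite (app_assoc (T (l - i))), (TT' m n), app_nil_l. reflexivity. }
  rewrite Hs3. rewrite (app_assoc (T i)), (T_add m n). replace (i + (l - i)) with l by ring. reflexivity.
Qed.

End Geo2.

Lemma div_small0 : forall w d, (w | d) -> Z.abs d < Z.abs w -> d = 0.
Proof.
  intros w d H Hl. destruct (Z.eq_dec d 0); auto. exfalso.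
  apply Z.divide_abs_l in H. apply Z.divide_abs_r in H.
  apply Z.divide_pos_le in H; lia.
Qed.

Section NT.
Variables m n : Z.
Hypothesis Hm : m <> 0.
Hypothesis Hn : n <> 0.

Definition g0 := Z.gcd m n.
Definition uu := m / g0.
Definition ww := n / g0.

Lemma g0_pos : 0 < g0.
Proof.
  unfold g0. pose proof (Z.gcd_nonneg m n). destruct (Z.eq_dec (Z.gcd m n) 0).
  apply Z.gcd_eq_0 in e. lia. lia.
Qed.

Lemma m_eq : m = g0 * uu.
Proof.
  unfold uu. destruct (Z.gcd_divide_l m n) as [k Hk]. fold g0 in Hk.
  pose proof g0_pos. rewrite Hk at 2. rewrite Z.div_mul by lia. rewrite Hk. ring.
Qed.

Lemma n_eq : n = g0 * ww.
Proof.
  unfold ww. destruct (Z.gcd_divide_r m n) as [k Hk]. fold g0 in Hk.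
  pose proof g0_pos. rewrite Hk at 2. rewrite Z.div_mul by lia. rewrite Hk. ring.
Qed.

Lemma cop : Z.gcd ww uu = 1.
Proof.
  rewrite Z.gcd_comm. unfold uu, ww. apply Z.gcd_div_gcd; auto. pose proof g0_pos; lia.
Qed.

Lemma ww_ne : ww <> 0.
Proof. intro H. pose proof n_eq. rewrite H in H0. lia. Qed.
Lemma uu_ne : uu <> 0.
Proof. intro H. pose proof m_eq. rewrite H in H0. lia. Qed.

Lemma g0_le : g0 <= Z.abs m.
Proof.
  apply Z.divide_pos_le. lia. apply Z.divide_abs_r. apply Z.gcd_divide_l.
Qed.

Lemma abs_ww : Z.abs n = g0 * Z.abs ww.
Proof. rewrite n_eq at 1. rewrite Z.abs_mul. pose proof g0_pos. rewrite (Z.abs_eq g0); lia. Qed.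
Lemma abs_uu : Z.abs m = g0 * Z.abs uu.
Proof. rewrite m_eq at 1. rewrite Z.abs_mul. pose proof g0_pos. rewrite (Z.abs_eq g0); lia. Qed.

Lemma uw_lt : Z.abs m < Z.abs n -> Z.abs uu < Z.abs ww.
Proof. intros H. rewrite abs_ww, abs_uu in H. pose proof g0_pos. nia. Qed.

Lemma pow_cop : forall K, (ww | zpow uu K) -> (ww | 1).
Proof.
  induction K; simpl; intro H; auto.
  apply IHK. apply Z.gauss with uu; auto. apply cop.
Qed.

Lemma NT : Z.abs m < Z.abs n -> forall K, ~ (n | g0 * zpow uu K * 1).
Proof.
  intros Hlt K H. rewrite Z.mul_1_r, n_eq in H.
  apply Z.mul_divide_cancel_l in H; [|pose proof g0_pos; lia].
  apply pow_cop in H. apply Z.divide_1_r in H.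
  pose proof g0_le. pose proof abs_ww. destruct H as [H|H]; rewrite H in *; simpl in *; lia.
Qed.

End NT.

Section Geo3.
Variables m n : Z.
Hypothesis Hm : m <> 0.
Hypothesis Hn : n <> 0.
Local Notation E := (bs_eq m n).
Local Notation on := (on m n).

Lemma onAT : forall g i i' e, on (g ++ A i ++ T e) (g ++ A i' ++ T e) false ->
  exists s, E (T (- e) ++ A (i - i') ++ T e) (A s).
Proof.
  intros g i i' e [s Hs]. exists s. change [(false, s)] with (A s) in Hs.
  rewrite <- !app_assoc in Hs. apply (cancel_l m n) in Hs.
  assert (H2 : E (A (- i') ++ A i ++ T e) (A (- i') ++ A i' ++ T e ++ A s)) by (rewrite Hs; reflexivity).
  rewrite (app_assoc (A (- i'))), (A_add m n) in H2. rewrite (app_assoc (A (- i')) (A i')), (A_add m n) in H2.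
  replace (- i' + i') with 0 in H2 by ring. rewrite (A0 m n), app_nil_l in H2.
  replace (- i' + i) with (i - i') in H2 by ring.
  rewrite H2. rewrite app_assoc, (TT m n), app_nil_l. reflexivity.
Qed.

Lemma onAT0 : forall g i e, on (g ++ A i ++ T e) (g ++ T e) false ->
  exists s, E (T (- e) ++ A i ++ T e) (A s).
Proof.
  intros g i e H. assert (H' : on (g ++ A i ++ T e) (g ++ A 0 ++ T e) false).
  { apply on_resp_g with (g ++ T e); auto. rewrite (A0 m n), app_nil_l. reflexivity. }
  apply onAT in H'. replace (i - 0) with i in H' by ring. auto.
Qed.

Lemma Dist : forall g j j', 0 <= j < Z.abs (ww m n) -> 0 <= j' < Z.abs (ww m n) ->
  on (g ++ A (m * j) ++ T 1) (g ++ A (m * j') ++ T 1) false -> j = j'.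
Proof.
  intros g j j' Hj Hj' H. apply onAT in H. destruct H as [s H].
  destruct (britton m n Hm Hn 1 _ _ H) as [H1 _]. specialize (H1 ltac:(lia)).
  replace (m * j - m * j') with (m * (j - j')) in H1 by ring.
  pose proof (m_eq m n Hm Hn) as Hme; pose proof (n_eq m n Hm Hn) as Hne;
  pose proof (g0_pos m n Hm Hn) as Hg; pose proof (cop m n Hm Hn) as Hc.
  set (G := g0 m n) in *. set (U := uu m n) in *. set (W := ww m n) in *. clearbody G U W.
  rewrite Hne in H1. rewrite Hme in H1. rewrite <- Z.mul_assoc in H1.
  apply Z.mul_divide_cancel_l in H1; [|lia].
  apply Z.gauss in H1; auto.
  apply div_small0 in H1; lia.
Qed.

Lemma Red : forall g c, exists r, 0 <= r < Z.abs (uu m n) /\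
  on (g ++ A (n * c) ++ T (-1)) (g ++ A (n * r) ++ T (-1)) false.
Proof.
  intros g c. pose proof (uu_ne m n Hm Hn) as Hu.
  pose proof (m_eq m n Hm Hn) as Hme; pose proof (n_eq m n Hm Hn) as Hne.
  set (G := g0 m n) in *. set (UU := uu m n) in *. set (W := ww m n) in *. clearbody G UU W.
  set (U := Z.abs UU).
  exists (c mod U). split. apply Z.mod_pos_bound. unfold U; lia.
  set (q' := if Z_le_gt_dec 0 UU then c / U else - (c / U)).
  assert (Hc : c = UU * q' + c mod U).
  { pose proof (Z.div_mod c U ltac:(unfold U; lia)). unfold q', U in *.
    destruct (Z_le_gt_dec 0 UU).
    - rewrite Z.abs_eq in * by lia. lia.
    - rewrite Z.abs_neq in * by lia. lia. }
  exists (n * (W * q')).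
  change [(false, n * (W * q'))] with (A (n * (W * q'))).
  rewrite Hc at 1. replace (n * (UU * q' + c mod U)) with (n * (c mod U) + m * (W * q')).
  2:{ rewrite Hme, Hne. ring. }
  rewrite <- (A_add m n). rewrite <- !app_assoc. rewrite (push_ti m n).
  rewrite <- ?app_assoc. reflexivity.
Qed.

Lemma Dist1 : forall g i i', 0 <= i < Z.abs n -> 0 <= i' < Z.abs n ->
  on (g ++ A i ++ T 1) (g ++ A i' ++ T 1) false -> i = i'.
Proof.
  intros g i i' Hi Hi' H. apply onAT in H. destruct H as [s H].
  destruct (britton m n Hm Hn 1 _ _ H) as [H1 _]. specialize (H1 ltac:(lia)).
  apply div_small0 in H1; lia.
Qed.

Lemma Dist1m : forall g i i', 0 <= i < Z.abs m -> 0 <= i' < Z.abs m ->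
  on (g ++ A i ++ T (-1)) (g ++ A i' ++ T (-1)) false -> i = i'.
Proof.
  intros g i i' Hi Hi' H. apply onAT in H. destruct H as [s H].
  destruct (britton m n Hm Hn (-1) _ _ H) as [_ H1]. specialize (H1 ltac:(lia)).
  apply div_small0 in H1; lia.
Qed.

Lemma absdiv : forall N s, N <> 0 -> exists q, s = N * q + s mod Z.abs N.
Proof.
  intros N s HN. pose proof (Z.div_mod s (Z.abs N) ltac:(lia)).
  destruct (Z_le_gt_dec 0 N).
  - exists (s / Z.abs N). rewrite Z.abs_eq in * by lia. lia.
  - exists (- (s / Z.abs N)). rewrite Z.abs_neq in * by lia. lia.
Qed.

Lemma Red1 : forall g s, exists r, 0 <= r < Z.abs n /\ on (g ++ A s ++ T 1) (g ++ A r ++ T 1) false.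
Proof.
  intros g s. exists (s mod Z.abs n). split. apply Z.mod_pos_bound; lia.
  destruct (absdiv n s Hn) as [q Hq]. exists (m * q).
  change [(false, m * q)] with (A (m * q)).
  rewrite Hq at 1. rewrite Z.add_comm, <- (A_add m n). rewrite <- !app_assoc.
  rewrite (push_t m n). rewrite <- ?app_assoc. reflexivity.
Qed.

Lemma Red1m : forall g s, exists r, 0 <= r < Z.abs m /\ on (g ++ A s ++ T (-1)) (g ++ A r ++ T (-1)) false.
Proof.
  intros g s. exists (s mod Z.abs m). split. apply Z.mod_pos_bound; lia.
  destruct (absdiv m s Hm) as [q Hq]. exists (n * q).
  change [(false, n * q)] with (A (n * q)).
  rewrite Hq at 1. rewrite Z.add_comm, <- (A_add m n). rewrite <- !app_assoc.
  rewrite (push_ti m n). rewrite <- ?app_assoc. reflexivity.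
Qed.

Lemma VB : Z.abs m < Z.abs n -> forall g a b c, a < b < c ->
  exists y, on y (g ++ T a) false /\ on (y ++ T (b - a)) (g ++ T b) false /\
    forall s, ~ on (y ++ T s) (g ++ T c) false.
Proof.
  intros Hlt g a b c Hab.
  set (K := Z.to_nat (b - a)).
  set (i := g0 m n * zpow (uu m n) K * 1).
  pose proof (conj_k m n (g0 m n) (uu m n) (ww m n) (m_eq m n Hm Hn) (n_eq m n Hm Hn) K 1) as HK.
  fold i in HK. replace (Z.of_nat K) with (b - a) in HK by (unfold K; lia).
  exists (g ++ T b ++ A i ++ T (- (b - a))).
  assert (Hy : E (g ++ T b ++ A i ++ T (- (b - a))) (g ++ T a ++ A (g0 m n * zpow (ww m n) K * 1))).
  { replace b with (a + (b - a)) at 1 by ring. rewrite <- (T_add m n). rewrite <- !app_assoc.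
    rewrite <- HK. reflexivity. }
  split; [|split].
  - eapply on_resp. symmetry; apply Hy. exists (g0 m n * zpow (ww m n) K * 1).
    rewrite <- app_assoc. reflexivity.
  - exists i. change [(false, i)] with (A i). rewrite <- !app_assoc.
    rewrite (TT m n), app_nil_r. reflexivity.
  - intros s Hs.
    assert (Hts : s = c - a).
    { apply tau_on_a in Hs. rewrite !tau_app in Hs. pose proof (tau_sound m n _ _ Hy) as Ht.
      rewrite !tau_app in Ht. unfold A, T in Ht. simpl in Ht. unfold gen_a, gen_t in Ht. unfold A, T in Hs. simpl in Hs. unfold gen_a, gen_t in Hs. lia. }
    subst s. destruct Hs as [t Ht]. change [(false, t)] with (A t) in Ht.
    assert (H2 : E (g ++ T b ++ A i ++ T (c - b)) (g ++ T b ++ T (c - b) ++ A t)).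
    { transitivity ((g ++ T b ++ A i ++ T (- (b - a))) ++ T (c - a)).
      - rewrite <- !app_assoc. rewrite (T_add m n). replace (- (b - a) + (c - a)) with (c - b) by ring. reflexivity.
      - rewrite Ht. rewrite (app_assoc (T b)), (T_add m n). replace (b + (c - b)) with c by ring.
        rewrite app_assoc. reflexivity. }
    rewrite (app_assoc g (T b)) in H2. rewrite (app_assoc g (T b) (T (c - b) ++ A t)) in H2.
    apply conjA_of in H2; auto.
    destruct (britton m n Hm Hn (c - b) _ _ H2) as [H1 _]. specialize (H1 ltac:(lia)).
    apply (NT m n Hm Hn Hlt K). exact H1.
Qed.

End Geo3.

Section Mono.
Variable s : Z -> Z.
Hypothesis sinj : forall i j, s i = s j -> i = j.
Hypothesis ssurj : forall v, exists k, s k = v.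
Hypothesis snopeak : forall i l j, i < l < j -> s l < s i \/ s l < s j.

Definition up k := s k < s (k + 1).

Lemma up_or : forall k, up k \/ s (k + 1) < s k.
Proof.
  intros k. unfold up. destruct (Z.lt_trichotomy (s k) (s (k+1))) as [|[E|]]; auto.
  apply sinj in E. lia.
Qed.

Lemma fwd : forall k, up k -> up (k + 1).
Proof.
  intros k H. destruct (up_or (k + 1)) as [|H2]; auto. exfalso.
  unfold up in H. replace (k + 1 + 1) with (k + 2) in H2 by ring.
  destruct (snopeak k (k + 1) (k + 2) ltac:(lia)); lia.
Qed.

Lemma bwd : forall k, ~ up k -> ~ up (k - 1).
Proof.
  intros k H H1. destruct (up_or k) as [|H2]; auto.
  unfold up in H1. replace (k - 1 + 1) with k in H1 by ring.
  destruct (snopeak (k - 1) k (k + 1) ltac:(lia)); lia.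
Qed.

Lemma upfw : forall k d, up k -> up (k + Z.of_nat d).
Proof.
  intros k d H. induction d. simpl. rewrite Z.add_0_r; auto.
  rewrite Nat2Z.inj_succ. replace (k + Z.succ (Z.of_nat d)) with (k + Z.of_nat d + 1) by lia.
  apply fwd; auto.
Qed.

Lemma dnbw : forall k d, ~ up k -> ~ up (k - Z.of_nat d).
Proof.
  intros k d H. induction d. simpl. rewrite Z.sub_0_r; auto.
  rewrite Nat2Z.inj_succ. replace (k - Z.succ (Z.of_nat d)) with (k - Z.of_nat d - 1) by lia.
  apply bwd; auto.
Qed.

Lemma allup_incr : (forall k, up k) -> forall k d, s k + Z.of_nat d <= s (k + Z.of_nat d).
Proof.
  intros H k d. induction d. simpl. rewrite !Z.add_0_r. lia.
  rewrite Nat2Z.inj_succ. replace (k + Z.succ (Z.of_nat d)) with (k + Z.of_nat d + 1) by lia.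
  specialize (H (k + Z.of_nat d)). unfold up in H. lia.
Qed.

Lemma allup_succ : (forall k, up k) -> forall k, s (k + 1) = s k + 1.
Proof.
  intros H k. destruct (ssurj (s k + 1)) as [x Hx].
  destruct (Z_le_gt_dec x k).
  - pose proof (allup_incr H x (Z.to_nat (k - x))). rewrite Z2Nat.id in H0 by lia.
    replace (x + (k - x)) with k in H0 by ring. lia.
  - pose proof (allup_incr H (k + 1) (Z.to_nat (x - (k + 1)))). rewrite Z2Nat.id in H0 by lia.
    replace (k + 1 + (x - (k + 1))) with x in H0 by ring. specialize (H k). unfold up in H. lia.
Qed.

Lemma lin_of_succ : forall t : Z -> Z, (forall k, t (k + 1) = t k + 1) -> forall k, t k = t 0 + k.
Proof.
  intros t H k. pattern k. apply Z.peano_ind.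
  - ring.
  - intros x IH. rewrite <- Z.add_1_r, H. lia.
  - intros x IH. pose proof (H (Z.pred x)). replace (Z.pred x + 1) with x in H0 by lia. lia.
Qed.

Lemma fmin : forall a d, exists x0, a <= x0 <= a + Z.of_nat d /\
  forall x, a <= x <= a + Z.of_nat d -> s x0 <= s x.
Proof.
  intros a d. induction d.
  - exists a. split. lia. intros x Hx. simpl in Hx. replace x with a by lia. lia.
  - destruct IHd as [x0 [Hx0 Hm]]. rewrite Nat2Z.inj_succ.
    destruct (Z_le_gt_dec (s x0) (s (a + Z.of_nat d + 1))).
    + exists x0. split. lia. intros x Hx. destruct (Z.eq_dec x (a + Z.of_nat d + 1)).
      subst; lia. apply Hm; lia.
    + exists (a + Z.of_nat d + 1). split. lia. intros x Hx. destruct (Z.eq_dec x (a + Z.of_nat d + 1)).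
      subst; lia. specialize (Hm x ltac:(lia)). lia.
Qed.

Lemma mixed_false : forall k1 k2, ~ up k1 -> up k2 -> False.
Proof.
  intros k1 k2 H1 H2.
  assert (Hlt : k1 < k2).
  { destruct (Z_lt_le_dec k1 k2); auto. exfalso. apply H1.
    pose proof (upfw k2 (Z.to_nat (k1 - k2)) H2). rewrite Z2Nat.id in H by lia.
    replace (k2 + (k1 - k2)) with k1 in H by ring. auto. }
  destruct (fmin (k1 + 1) (Z.to_nat (k2 - (k1 + 1)))) as [x0 [Hx0 Hmin]].
  rewrite Z2Nat.id in * by lia.
  assert (Hall : forall x, s x0 <= s x).
  { intros x. destruct (Z_le_gt_dec x (k1 + 1)).
    - assert (forall d, s (k1 + 1) <= s (k1 + 1 - Z.of_nat d)).
      { induction d. simpl. rewrite Z.sub_0_r. lia.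
        rewrite Nat2Z.inj_succ.
        pose proof (dnbw k1 d H1) as Hd. destruct (up_or (k1 - Z.of_nat d)) as [Hu|Hu]; [contradiction|].
        replace (k1 - Z.of_nat d + 1) with (k1 + 1 - Z.of_nat d) in Hu by ring.
        replace (k1 + 1 - Z.succ (Z.of_nat d)) with (k1 - Z.of_nat d) by lia. lia. }
      specialize (H (Z.to_nat (k1 + 1 - x))). rewrite Z2Nat.id in H by lia.
      replace (k1 + 1 - (k1 + 1 - x)) with x in H by ring.
      specialize (Hmin (k1 + 1) ltac:(lia)). lia.
    - destruct (Z_le_gt_dec x k2).
      + apply Hmin; lia.
      + assert (forall d, s k2 <= s (k2 + Z.of_nat d)).
        { induction d. simpl. rewrite Z.add_0_r. lia.
          rewrite Nat2Z.inj_succ. pose proof (upfw k2 d H2) as Hd. unfold up in Hd.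
          replace (k2 + Z.succ (Z.of_nat d)) with (k2 + Z.of_nat d + 1) by lia. lia. }
        specialize (H (Z.to_nat (x - k2))). rewrite Z2Nat.id in H by lia.
        replace (k2 + (x - k2)) with x in H by ring.
        specialize (Hmin k2 ltac:(lia)). lia. }
  destruct (ssurj (s x0 - 1)) as [x Hx]. specialize (Hall x). lia.
Qed.

Lemma mono_case : (forall k, up k) \/ (forall k, ~ up k).
Proof.
  destruct (classic (forall k, up k)) as [|H1]; auto.
  destruct (classic (forall k, ~ up k)) as [|H2]; auto.
  exfalso. apply not_all_ex_not in H1. apply not_all_ex_not in H2.
  destruct H1 as [k1 H1]. destruct H2 as [k2 H2]. apply NNPP in H2.
  apply (mixed_false k1 k2); auto.
Qed.

End Mono.

Lemma mono_Z : forall s : Z -> Z,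
  (forall i j, s i = s j -> i = j) -> (forall v, exists k, s k = v) ->
  (forall i l j, i < l < j -> s l < s i \/ s l < s j) ->
  (forall k, s k = s 0 + k) \/ (forall k, s k = s 0 - k).
Proof.
  intros s Hi Hs Hp.
  destruct (mono_case s Hi Hs Hp) as [H|H].
  - left. apply lin_of_succ. apply allup_succ; auto.
  - right. set (t := fun k => s (- k)).
    assert (Ht : forall k, t (k + 1) = t k + 1).
    { apply (allup_succ t).
      - intros v. destruct (Hs v) as [k Hk]. exists (- k). unfold t. rewrite Z.opp_involutive; auto.
      - intros k. unfold up, t. destruct (up_or s Hi (- (k + 1))) as [Hu|Hu].
        + exfalso. apply (H (- (k + 1))). auto.
        + replace (- (k + 1) + 1) with (- k) in Hu by ring. lia. }
    intros k. pose proof (lin_of_succ t Ht (- k)). unfold t in H0.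
    rewrite Z.opp_involutive in H0. simpl in H0. lia.
Qed.

Lemma php : forall (M N : nat) (R : nat -> nat -> Prop),
  (forall j, (j < N)%nat -> exists r, (r < M)%nat /\ R j r) ->
  (forall j j' r, (j < N)%nat -> (j' < N)%nat -> R j r -> R j' r -> j = j') -> (N <= M)%nat.
Proof.
  induction M; intros N R H1 H2.
  - destruct N; auto. destruct (H1 0%nat ltac:(lia)) as [r [Hr _]]. lia.
  - destruct (classic (exists j0, (j0 < N)%nat /\ R j0 M)) as [[j0 [Hj0 Hr0]]|Hno].
    + set (idx := fun j => if Nat.ltb j j0 then j else S j).
      assert (Hidx : forall j, (j < N - 1)%nat -> (idx j < N)%nat /\ idx j <> j0).
      { intros j Hj. unfold idx. destruct (Nat.ltb_spec j j0); lia. }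
      assert (IH := IHM (N - 1)%nat (fun j r => R (idx j) r /\ (r < M)%nat)).
      assert (N - 1 <= M)%nat; [|lia].
      apply IH.
      * intros j Hj. destruct (Hidx j Hj) as [Hi1 Hi2].
        destruct (H1 (idx j) Hi1) as [r [Hr HR]]. exists r.
        assert (r <> M) by (intro; subst; apply Hi2; apply (H2 _ _ M); auto).
        split; [lia|split; auto; lia].
      * intros j j' r Hj Hj' [Ha _] [Hb _].
        destruct (Hidx j Hj), (Hidx j' Hj').
        pose proof (H2 _ _ r H H3 Ha Hb). unfold idx in H5.
        destruct (Nat.ltb_spec j j0), (Nat.ltb_spec j' j0); lia.
    + assert (IH := IHM N (fun j r => R j r /\ (r < M)%nat)).
      assert (N <= M)%nat; [|lia].
      apply IH.
      * intros j Hj. destruct (H1 j Hj) as [r [Hr HR]]. exists r.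
        assert (r <> M) by (intro; subst; apply Hno; exists j; auto).
        split; [lia|split; auto; lia].
      * intros j j' r Hj Hj' [Ha _] [Hb _]. apply (H2 _ _ r); auto.
Qed.

Lemma phpZ : forall (M N : Z) (R : Z -> Z -> Prop), 0 <= N -> 0 <= M ->
  (forall j, 0 <= j < N -> exists r, 0 <= r < M /\ R j r) ->
  (forall j j' r, 0 <= j < N -> 0 <= j' < N -> R j r -> R j' r -> j = j') -> N <= M.
Proof.
  intros M N R HN HM H1 H2.
  assert (Z.to_nat N <= Z.to_nat M)%nat; [|lia].
  apply (php (Z.to_nat M) (Z.to_nat N) (fun j r => R (Z.of_nat j) (Z.of_nat r))).
  - intros j Hj. destruct (H1 (Z.of_nat j) ltac:(lia)) as [r [Hr HR]].
    exists (Z.to_nat r). split. lia. rewrite Z2Nat.id by lia. auto.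
  - intros j j' r Hj Hj' Ha Hb. pose proof (H2 (Z.of_nat j) (Z.of_nat j') (Z.of_nat r) ltac:(lia) ltac:(lia) Ha Hb). lia.
Qed.

Notation onT := on (only parsing).

Section Main.
Variables m n m' n' : Z.
Variable phi : word -> word.
Hypothesis Hm : m <> 0.
Hypothesis Hn : n <> 0.
Hypothesis Hm' : m' <> 0.
Hypothesis Hn' : n' <> 0.
Hypothesis Hlt : Z.abs m < Z.abs n.
Hypothesis Hlt' : Z.abs m' < Z.abs n'.
Hypothesis Hbij : is_bijection m n m' n' phi.
Hypothesis Hlp : line_preserving m n m' n' phi.

Local Notation E := (bs_eq m n).
Local Notation E' := (bs_eq m' n').
Local Notation on := (on m n).
Local Notation on' := (onT m' n').

Lemma WD : forall u v, E u v -> E' (phi u) (phi v).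
Proof. destruct Hbij as [H _]. exact H. Qed.
Lemma INJ : forall u v, E' (phi u) (phi v) -> E u v.
Proof. destruct Hbij as [_ [H _]]. exact H. Qed.
Lemma SURJ : forall w, exists u, E' (phi u) w.
Proof. destruct Hbij as [_ [_ H]]. exact H. Qed.

Definition ty (g : word) (b c : bool) : Prop :=
  exists h, forall x, on x g b <-> on' (phi x) h c.

Lemma ty_ex : forall g b, exists c, ty g b c.
Proof.
  intros g b. destruct (Hlp g b) as [h [c [H1 H2]]]. exists c, h. intros x. split.
  - intros [k Hk]. destruct (H1 k) as [l Hl]. exists l. rewrite (WD _ _ Hk). exact Hl.
  - intros [l Hl]. destruct (H2 l) as [k Hk]. exists k. apply INJ. rewrite Hl, Hk. reflexivity.
Qed.

Lemma ty_base : forall g b c, ty g b c -> forall x, on x g b <-> on' (phi x) (phi g) c.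
Proof.
  intros g b c [h H] x. assert (Hg : on' (phi g) h c) by (apply H, on_base).
  rewrite H. split; intro Hx.
  - apply (same_line m' n') with h h; auto. apply on_base. apply on_sym; auto.
  - apply (same_line m' n') with (phi g) (phi g); auto. apply on_base.
Qed.

Lemma ty_diff : forall g c1 c2, ty g false c1 -> ty g true c2 -> c1 <> c2.
Proof.
  intros g c1 c2 H1 H2 Ec. subst c2.
  assert (Ha : on (g ++ A 1) g false) by apply on_pt.
  apply (ty_base _ _ _ H1) in Ha. apply (ty_base _ _ _ H2) in Ha.
  apply (on_a_eq m n Hm Hn) in Ha. lia.
Qed.

Lemma ty_move : forall g b c x, ty g b c -> on x g b -> ty x b c.
Proof.
  intros g b c x [h H] Hx. exists h. intros y. rewrite <- H. split; intro Hy.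
  - apply on_trans with x; auto.
  - apply (same_line m n) with g g; auto. apply on_base. apply on_sym; auto.
Qed.

Lemma ty_uniq : forall g b c1 c2, ty g b c1 -> ty g b c2 -> c1 = c2.
Proof.
  intros g b c1 c2 [h1 H1] [h2 H2]. apply (set_type m' n' Hm' Hn' h1 c1 h2 c2).
  intros q. destruct (SURJ q) as [u Hu]. split; intro Hq.
  - apply (on_resp m' n') with (phi u); auto. apply H2, H1. apply (on_resp m' n') with q; auto. symmetry; auto.
  - apply (on_resp m' n') with (phi u); auto. apply H1, H2. apply (on_resp m' n') with q; auto. symmetry; auto.
Qed.

Definition c0 : bool := proj1_sig (constructive_indefinite_description _ (ty_ex [] false)).
Lemma c0_spec : ty [] false c0.
Proof. unfold c0. destruct (constructive_indefinite_description _ _). auto. Qed.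

Lemma other : forall g b c c', ty g b c -> ty g (negb b) c' -> c' = negb c.
Proof.
  intros g b c c' H H'. destruct b; simpl in H'.
  - pose proof (ty_diff _ _ _ H' H). destruct c, c'; simpl; congruence.
  - pose proof (ty_diff _ _ _ H H'). destruct c, c'; simpl; congruence.
Qed.

Lemma ty_all : forall w, ty w false c0 /\ ty w true (negb c0).
Proof.
  intros w. pattern w. apply rev_ind; clear w.
  - split. apply c0_spec. destruct (ty_ex [] true) as [c Hc].
    pose proof (other [] false c0 c c0_spec Hc). subst; auto.
  - intros [b k] w [IH1 IH2].
    assert (Hx : on (w ++ [(b, k)]) w b) by apply on_pt.
    destruct b.
    + assert (H2 : ty (w ++ [(true, k)]) true (negb c0)) by (eapply ty_move; eauto).
      destruct (ty_ex (w ++ [(true, k)]) false) as [c Hc].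
      pose proof (other _ true _ _ H2 Hc). rewrite Bool.negb_involutive in H. subst; auto.
    + assert (H1 : ty (w ++ [(false, k)]) false c0) by (eapply ty_move; eauto).
      destruct (ty_ex (w ++ [(false, k)]) true) as [c Hc].
      pose proof (other _ false _ _ H1 Hc). subst; auto.
Qed.

Definition tb (b : bool) := if b then negb c0 else c0.

Lemma CorrX : forall x y b, on y x b <-> on' (phi y) (phi x) (tb b).
Proof.
  intros x y b. destruct (ty_all x) as [H1 H2]. destruct b; simpl.
  apply (ty_base _ _ _ H2). apply (ty_base _ _ _ H1).
Qed.

Lemma on'_phi_resp : forall w x y c, E' (phi x) (phi y) -> on' w (phi x) c -> on' w (phi y) c.
Proof. intros. apply (on_resp_g m' n') with (phi x); auto. Qed.

Section Swap.
Hypothesis Hsw : c0 = true.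

Lemma sw_a : forall x y, on y x false <-> on' (phi y) (phi x) true.
Proof. intros. pose proof (CorrX x y false). unfold tb in H. rewrite Hsw in H. auto. Qed.
Lemma sw_t : forall x y, on y x true <-> on' (phi y) (phi x) false.
Proof. intros. pose proof (CorrX x y true). unfold tb in H. rewrite Hsw in H. auto. Qed.

Lemma sw_m' : ~ Z.abs m' >= 2.
Proof.
  intros H2.
  set (z := phi []).
  destruct (SURJ (z ++ A 1)) as [y Hy].
  assert (Hyt : on y [] true).
  { apply sw_t. apply (on_resp m' n') with (z ++ A 1). symmetry; auto. apply on_pt. }
  destruct Hyt as [k Hk]. simpl in Hk.
  assert (Hk0 : k <> 0).
  { intro; subst k. assert (E' (z ++ A 1) (z ++ [])).
    { rewrite <- Hy, app_nil_r. apply WD. rewrite Hk. apply bs_zero. }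
    apply (cancel_l m' n') in H. apply (a_triv m' n' Hm' Hn') in H. lia. }
  destruct (QT m n Hm Hn [] k Hk0) as [c [Hc HQ]]. rewrite !app_nil_l in HQ.
  assert (P1 : on' (phi (A c)) z true) by (apply sw_a; exists c; reflexivity).
  assert (P2 : on' (phi (A c ++ T k)) (z ++ A 1) true).
  { apply (on_resp_g m' n') with (phi y); auto. apply sw_a.
    apply (on_resp_g m n) with (T k). symmetry; auto. auto. }
  assert (P3 : on' (phi (A c ++ T k)) (phi (A c)) false) by (apply sw_t; apply on_pt).
  pose proof (QAfail m' n' Hm' Hn' H2 ltac:(lia) _ _ _ P1 P2 P3) as H4.
  apply sw_t in H4. destruct H4 as [j Hj]. simpl in Hj.
  apply (a_t m n Hm Hn) in Hj. lia.
Qed.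

Lemma sw_m : ~ Z.abs m >= 2.
Proof.
  intros H2. set (z := phi []).
  assert (H1 : on' (phi (A 1)) z true) by (apply sw_a; exists 1; reflexivity).
  destruct H1 as [k Hk].
  assert (Hk0 : k <> 0).
  { intro; subst k. assert (E (A 1) []).
    { apply INJ. rewrite Hk. rewrite bs_zero, app_nil_r. reflexivity. }
    apply (a_triv m n Hm Hn) in H. lia. }
  destruct (QT m' n' Hm' Hn' z k Hk0) as [c [Hc HQ]].
  destruct (SURJ (z ++ A c)) as [u1 Hu1].
  destruct (SURJ (z ++ A c ++ T k)) as [u2 Hu2].
  assert (Q1 : on u2 u1 false).
  { apply sw_a. apply (on_resp m' n') with (z ++ A c ++ T k). symmetry; auto.
    apply (on_resp_g m' n') with (z ++ A c). symmetry; auto. rewrite app_assoc. apply on_pt. }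
  assert (Q2 : on u1 [] true).
  { apply sw_t. apply (on_resp m' n') with (z ++ A c). symmetry; auto. apply on_pt. }
  assert (Q3 : on u2 ([] ++ A 1) true).
  { apply sw_t. apply (on_resp m' n') with (z ++ A c ++ T k). symmetry; auto.
    apply (on_resp_g m' n') with (z ++ T k). symmetry; auto. auto. }
  pose proof (QAfail m n Hm Hn H2 ltac:(lia) _ _ _ Q2 Q3 Q1) as H4.
  apply sw_a in H4.
  assert (H5 : on' (z ++ A c) z true) by (apply (on_resp m' n') with (phi u1); auto).
  apply (on_a_eq m' n' Hm' Hn') in H5. lia.
Qed.

Lemma sw_false : False.
Proof.
  pose proof sw_m. pose proof sw_m'.
  assert (Hmm : m * m = 1) by (destruct (Z.abs_spec m); nia).
  destruct (SURJ []) as [u1 Hu1]. destruct (SURJ (T (-1) ++ A 1 ++ T 1)) as [u2 Hu2].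
  destruct (RT m n Hmm u1 u2) as [x [y [H1 [H2 H3]]]].
  apply sw_t in H1. apply sw_t in H2. apply sw_a in H3.
  assert (H1' : on' (phi x) [] false) by (apply (on_resp_g m' n') with (phi u1); auto).
  assert (H2' : on' (phi y) (T (-1) ++ A 1 ++ T 1) false) by (apply (on_resp_g m' n') with (phi u2); auto).
  apply (RAfail m' n' Hm' Hn' ltac:(lia) _ _ H1' H2' H3).
Qed.

End Swap.

Lemma c0_false : c0 = false.
Proof. destruct c0 eqn:Hc; auto. exfalso. apply sw_false; auto. Qed.

Lemma Corr : forall x y b, on y x b <-> on' (phi y) (phi x) b.
Proof.
  intros x y b. rewrite CorrX. unfold tb. rewrite c0_false. destruct b; reflexivity.
Qed.

Lemma pull : forall x w b, on' w (phi x) b -> exists u, E' (phi u) w /\ on u x b.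
Proof.
  intros x w b Hw. destruct (SURJ w) as [u Hu]. exists u. split; auto.
  apply Corr. apply (on_resp m' n') with w; auto. symmetry; auto.
Qed.

Lemma pull_t : forall x w, on' w (phi x) true -> exists d, E' w (phi (x ++ T d)).
Proof.
  intros x w Hw. destruct (pull x w true Hw) as [u [Hu [d Hd]]].
  exists d. rewrite <- Hu. apply WD. exact Hd.
Qed.

Lemma sig_ex : forall g k, exists l, E' (phi (g ++ T k)) (phi g ++ T l).
Proof.
  intros g k. assert (H : on (g ++ T k) g true) by (exists k; reflexivity).
  apply Corr in H. exact H.
Qed.

Definition sig (g : word) (k : Z) : Z := proj1_sig (constructive_indefinite_description _ (sig_ex g k)).

Lemma sig_spec : forall g k, E' (phi (g ++ T k)) (phi g ++ T (sig g k)).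
Proof. intros. unfold sig. destruct (constructive_indefinite_description _ _). auto. Qed.

Lemma tcancel' : forall x i j, E' (x ++ T i) (x ++ T j) -> i = j.
Proof. intros x i j H. apply (cancel_l m' n') in H. apply (t_inj m' n') in H. auto. Qed.

Lemma sig_inj : forall g i j, sig g i = sig g j -> i = j.
Proof.
  intros g i j H. assert (E' (phi (g ++ T i)) (phi (g ++ T j))).
  { rewrite !sig_spec, H. reflexivity. }
  apply INJ in H0. apply (cancel_l m n) in H0. apply (t_inj m n) in H0. auto.
Qed.

Lemma sig_surj : forall g l, exists k, sig g k = l.
Proof.
  intros g l. destruct (pull_t g (phi g ++ T l)) as [d Hd]. exists l; reflexivity.
  exists d. rewrite sig_spec in Hd. symmetry. apply tcancel' with (phi g). auto.
Qed.

Lemma sig0 : forall g, sig g 0 = 0.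
Proof.
  intros g. pose proof (sig_spec g 0).
  assert (E' (phi g ++ T 0) (phi g ++ T (sig g 0))).
  { assert (H1 : E' (phi g ++ T 0) (phi g)) by (rewrite (T0 m' n'), app_nil_r; reflexivity).
    assert (H2 : E' (phi g) (phi (g ++ T 0))) by (apply WD; rewrite (T0 m n), app_nil_r; reflexivity).
    transitivity (phi g). exact H1. transitivity (phi (g ++ T 0)). exact H2. exact H. }
  apply tcancel' in H0. auto.
Qed.

Lemma colin' : forall a b c, on' a c false -> on' b c false -> on' a b false.
Proof.
  intros a b c Ha Hb. apply (same_line m' n') with c c; auto. apply on_base. apply on_sym; auto.
Qed.

Lemma tau_phi_a : forall y g, on y g false -> tau (phi y) = tau (phi g).
Proof. intros y g H. apply Corr in H. apply tau_on_a in H. auto. Qed.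

Lemma mid_tr : forall g x i l j, i < l < j -> on x (g ++ T i) false -> on (x ++ T (j - i)) (g ++ T j) false ->
  on' (phi (x ++ T (l - i))) (phi g ++ T (sig g l)) false /\ on' (phi (x ++ T (l - i))) (phi x) true.
Proof.
  intros g x i l j Hl H1 H2. pose proof (MidA m n Hm Hn g x i l j Hl H1 H2) as H3.
  split.
  - apply Corr in H3. apply (on_resp_g m' n') with (phi (g ++ T l)); auto. apply sig_spec.
  - apply Corr. exists (l - i). reflexivity.
Qed.

Lemma nopeak : forall g i l j, i < l < j -> sig g l < sig g i \/ sig g l < sig g j.
Proof.
  intros g i l j Hl.
  destruct (Z_lt_le_dec (sig g l) (sig g i)); auto.
  destruct (Z_lt_le_dec (sig g l) (sig g j)); auto. exfalso.
  assert (sig g i <> sig g l) by (intro E0; apply sig_inj in E0; lia).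
  assert (sig g j <> sig g l) by (intro E0; apply sig_inj in E0; lia).
  assert (sig g i <> sig g j) by (intro E0; apply sig_inj in E0; lia).
  set (a := sig g i) in *. set (b := sig g j) in *. set (c := sig g l) in *.
  set (P := phi g).
  assert (HPi : E' (phi (g ++ T i)) (P ++ T a)) by apply sig_spec.
  assert (HPj : E' (phi (g ++ T j)) (P ++ T b)) by apply sig_spec.
  destruct (Z_lt_le_dec a b).
  - destruct (VB m' n' Hm' Hn' Hlt' P a b c ltac:(lia)) as [y' [Y1 [Y2 Y3]]].
    destruct (SURJ y') as [y Hy].
    assert (Hy1 : on y (g ++ T i) false).
    { apply Corr. apply (on_resp m' n') with y'. symmetry; auto.
      apply (on_resp_g m' n') with (P ++ T a); auto. symmetry; auto. }
    destruct (pull_t y (y' ++ T (b - a))) as [d Hd].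
    { apply (on_resp_g m' n') with y'. symmetry; auto. exists (b - a); reflexivity. }
    assert (Hy2 : on (y ++ T d) (g ++ T j) false).
    { apply Corr. apply (on_resp m' n') with (y' ++ T (b - a)); auto.
      apply (on_resp_g m' n') with (P ++ T b); auto. symmetry; auto. }
    assert (Hdd : d = j - i).
    { apply tau_on_a in Hy1. apply tau_on_a in Hy2. rewrite !tau_T in *. lia. }
    subst d. destruct (mid_tr g y i l j Hl Hy1 Hy2) as [M1 [s Hs]].
    apply (Y3 s). apply (on_resp m' n') with (phi (y ++ T (l - i))); auto.
    rewrite Hs. rewrite Hy. reflexivity.
  - destruct (VB m' n' Hm' Hn' Hlt' P b a c ltac:(lia)) as [y' [Y1 [Y2 Y3]]].
    destruct (SURJ y') as [y Hy].
    assert (Hy1 : on y (g ++ T j) false).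
    { apply Corr. apply (on_resp m' n') with y'. symmetry; auto.
      apply (on_resp_g m' n') with (P ++ T b); auto. symmetry; auto. }
    destruct (pull_t y (y' ++ T (a - b))) as [d Hd].
    { apply (on_resp_g m' n') with y'. symmetry; auto. exists (a - b); reflexivity. }
    assert (Hx1 : on (y ++ T d) (g ++ T i) false).
    { apply Corr. apply (on_resp m' n') with (y' ++ T (a - b)); auto.
      apply (on_resp_g m' n') with (P ++ T a); auto. symmetry; auto. }
    assert (Hdd : d = i - j).
    { apply tau_on_a in Hy1. apply tau_on_a in Hx1. rewrite !tau_T in *. lia. }
    subst d.
    assert (Hx2 : on ((y ++ T (i - j)) ++ T (j - i)) (g ++ T j) false).
    { apply (on_resp m n) with y; auto. rewrite <- app_assoc, (T_add m n).
      replace (i - j + (j - i)) with 0 by ring. rewrite (T0 m n), app_nil_r. reflexivity. }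
    destruct (mid_tr g _ i l j Hl Hx1 Hx2) as [M1 M2].
    assert (M3 : on' (phi ((y ++ T (i - j)) ++ T (l - i))) y' true).
    { apply on_trans with (phi (y ++ T (i - j))); auto.
      apply (on_resp m' n') with (y' ++ T (a - b)). auto.
      exists (a - b); reflexivity. }
    destruct M3 as [s Hs]. apply (Y3 s). apply (on_resp m' n') with (phi ((y ++ T (i - j)) ++ T (l - i))); auto.
Qed.

Lemma sig_lin : forall g, (forall k, sig g k = k) \/ (forall k, sig g k = - k).
Proof.
  intros g. destruct (mono_Z (sig g) (sig_inj g) (sig_surj g) (nopeak g)) as [H|H];
  [left|right]; intros k; rewrite H, sig0; ring.
Qed.

Lemma dir_transfer : forall g y e, on y g false -> on (y ++ T e) (g ++ T e) false -> sig y e = sig g e.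
Proof.
  intros g y e H1 H2. apply tau_phi_a in H1. apply tau_phi_a in H2.
  rewrite (tau_sound m' n' _ _ (sig_spec y e)), (tau_sound m' n' _ _ (sig_spec g e)) in H2.
  rewrite !tau_T in H2. lia.
Qed.

Lemma dec_of : forall y e, e <> 0 -> sig y e = - e -> forall k, sig y k = - k.
Proof.
  intros y e He H. destruct (sig_lin y) as [H'|H']; auto. rewrite H' in H. lia.
Qed.

Lemma no_dec : forall g, ~ (forall k, sig g k = - k).
Proof.
  intros g Hdec. set (P := phi g).
  assert (HP1 : E' (phi (g ++ T (-1))) (P ++ T 1)) by (rewrite sig_spec, Hdec; reflexivity).
  assert (HP2 : E' (phi (g ++ T 1)) (P ++ T (-1))) by (rewrite sig_spec, Hdec; reflexivity).
  assert (A1 : Z.abs (ww m n) <= Z.abs (uu m' n')).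
  { apply (phpZ _ _ (fun j r => on' (phi (g ++ A (m * j) ++ T 1)) (P ++ A (n' * r) ++ T (-1)) false)); try lia.
    - intros j Hj. set (y := g ++ A (m * j)).
      assert (Hy : on y g false) by (exists (m * j); reflexivity).
      assert (Hy1 : on (y ++ T (-1)) (g ++ T (-1)) false).
      { exists (n * j). unfold y. rewrite <- app_assoc, (push_ti m n), <- app_assoc. reflexivity. }
      assert (Hsy : sig y (-1) = 1) by (rewrite (dir_transfer g y (-1) Hy Hy1), Hdec; ring).
      pose proof (dec_of y (-1) ltac:(lia) ltac:(rewrite Hsy; ring)) as Hdy.
      assert (Hpy : on' (phi y) P false) by (apply Corr; auto).
      destruct Hpy as [i Hi]. change [(false, i)] with (A i) in Hi.
      assert (Hq : on' (P ++ A i ++ T 1) (P ++ T 1) false).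
      { apply Corr in Hy1. apply (on_resp_g m' n') with (phi (g ++ T (-1))); auto.
        apply (on_resp m' n') with (phi (y ++ T (-1))); auto.
        rewrite sig_spec, Hdy, Hi, <- app_assoc. reflexivity. }
      destruct (onAT0 m' n' _ _ _ Hq) as [s Hs].
      destruct (britton m' n' Hm' Hn' 1 _ _ Hs) as [Hb _]. destruct (Hb ltac:(lia)) as [c' Hc'].
      destruct (Red m' n' Hm' Hn' P c') as [r [Hr Hr2]].
      exists r. split; auto.
      apply (on_resp m' n') with (P ++ A (n' * c') ++ T (-1)); auto.
      rewrite (app_assoc g). fold y. rewrite sig_spec, Hdy, Hi, Hc'. replace (c' * n') with (n' * c') by ring. rewrite <- app_assoc. reflexivity.
    - intros j j' r Hj Hj' R1 R2.
      pose proof (colin' _ _ _ R2 R1) as R3. apply Corr in R3.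
      symmetry. apply (Dist m n Hm Hn g j' j); auto. }
  assert (A2 : Z.abs (ww m' n') <= Z.abs (uu m n)).
  { apply (phpZ _ _ (fun r j => on' (P ++ A (m' * r) ++ T 1) (phi (g ++ A (n * j) ++ T (-1))) false)); try lia.
    - intros r Hr. set (v := P ++ A (m' * r)).
      destruct (pull g v false) as [u [Hu Hug]]. exists (m' * r); reflexivity.
      assert (Hv : on' (v ++ T (-1)) (phi (g ++ T 1)) false).
      { apply (on_resp_g m' n') with (P ++ T (-1)). symmetry; auto.
        exists (n' * r). unfold v. rewrite <- app_assoc, (push_ti m' n'), <- app_assoc. reflexivity. }
      destruct (pull_t u (v ++ T (-1))) as [d Hd].
      { apply (on_resp_g m' n') with v. symmetry; auto. exists (-1); reflexivity. }
      assert (Hud : on (u ++ T d) (g ++ T 1) false).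
      { apply Corr. apply (on_resp m' n') with (v ++ T (-1)); auto. }
      assert (d = 1).
      { pose proof (tau_on_a m n _ _ Hud). pose proof (tau_on_a m n _ _ Hug). rewrite !tau_T in *. lia. }
      subst d.
      assert (Hsu : sig u 1 = -1).
      { apply tcancel' with v. transitivity (phi (u ++ T 1)). { rewrite sig_spec, Hu. reflexivity. } symmetry; exact Hd. }
      pose proof (dec_of u 1 ltac:(lia) Hsu) as Hdu.
      destruct Hug as [i Hi]. change [(false, i)] with (A i) in Hi.
      assert (Hq : on (g ++ A i ++ T 1) (g ++ T 1) false).
      { apply (on_resp m n) with (u ++ T 1); auto. rewrite Hi, <- app_assoc. reflexivity. }
      destruct (onAT0 m n _ _ _ Hq) as [s Hs].
      destruct (britton m n Hm Hn 1 _ _ Hs) as [Hb _]. destruct (Hb ltac:(lia)) as [c Hc].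
      destruct (Red m n Hm Hn g c) as [j [Hj Hj2]].
      exists j. split; auto.
      assert (Hu1 : on (u ++ T (-1)) (g ++ A (n * j) ++ T (-1)) false).
      { apply (on_resp m n) with (g ++ A (n * c) ++ T (-1)); auto.
        rewrite Hi, Hc, Z.mul_comm, <- app_assoc. reflexivity. }
      apply Corr in Hu1. apply (on_resp m' n') with (phi (u ++ T (-1))); auto.
      rewrite sig_spec, Hdu, Hu. unfold v. rewrite <- app_assoc. reflexivity.
    - intros r r' j Hr Hr' R1 R2.
      pose proof (colin' _ _ _ R2 R1) as R3.
      symmetry. apply (Dist m' n' Hm' Hn' P r' r); auto. }
  pose proof (uw_lt m n Hm Hn Hlt). pose proof (uw_lt m' n' Hm' Hn' Hlt'). lia.
Qed.

Lemma sig_id : forall g k, sig g k = k.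
Proof. intros g. destruct (sig_lin g) as [H|H]; auto. exfalso. apply (no_dec g H). Qed.

Lemma count_gen : forall (e N N' : Z), 0 <= N -> 0 <= N' ->
  (forall g i i', 0 <= i < N -> 0 <= i' < N -> on (g ++ A i ++ T e) (g ++ A i' ++ T e) false -> i = i') ->
  (forall g s, exists r, 0 <= r < N /\ on (g ++ A s ++ T e) (g ++ A r ++ T e) false) ->
  (forall g i i', 0 <= i < N' -> 0 <= i' < N' -> on' (g ++ A i ++ T e) (g ++ A i' ++ T e) false -> i = i') ->
  (forall g s, exists r, 0 <= r < N' /\ on' (g ++ A s ++ T e) (g ++ A r ++ T e) false) ->
  N = N'.
Proof.
  intros e N N' HN HN' D1 R1 D1' R1'. set (P := phi []).
  assert (N <= N').
  { apply (phpZ _ _ (fun i r => on' (phi ([] ++ A i ++ T e)) (P ++ A r ++ T e) false)); auto.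
    - intros i Hi. assert (Hy : on' (phi (A i)) P false) by (apply Corr; exists i; reflexivity).
      destruct Hy as [s Hs]. change [(false, s)] with (A s) in Hs.
      destruct (R1' P s) as [r [Hr Hr2]]. exists r. split; auto.
      apply (on_resp m' n') with (P ++ A s ++ T e); auto.
      change ([] ++ A i ++ T e) with (A i ++ T e). rewrite sig_spec, sig_id, Hs, <- app_assoc. reflexivity.
    - intros i i' r Hi Hi' Ra Rb. pose proof (colin' _ _ _ Rb Ra) as R3. apply Corr in R3.
      symmetry. apply (D1 [] i' i); auto. }
  assert (N' <= N).
  { apply (phpZ _ _ (fun r i => on' (P ++ A r ++ T e) (phi ([] ++ A i ++ T e)) false)); auto.
    - intros r Hr. destruct (pull [] (P ++ A r) false) as [u [Hu [s Hs]]]. exists r; reflexivity.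
      change [(false, s)] with (A s) in Hs.
      destruct (R1 [] s) as [i [Hi Hi2]]. exists i. split; auto.
      assert (Hu1 : on (u ++ T e) ([] ++ A i ++ T e) false).
      { apply (on_resp m n) with ([] ++ A s ++ T e); auto. rewrite Hs. reflexivity. }
      apply Corr in Hu1. apply (on_resp m' n') with (phi (u ++ T e)); auto.
      rewrite sig_spec, sig_id, Hu, <- app_assoc. reflexivity.
    - intros r r' i Hr Hr' Ra Rb. pose proof (colin' _ _ _ Rb Ra) as R3.
      symmetry. apply (D1' P r' r); auto. }
  lia.
Qed.

Lemma final_n : Z.abs n = Z.abs n'.
Proof.
  apply (count_gen 1); try lia.
  - apply (Dist1 m n Hm Hn).
  - apply (Red1 m n Hn).
  - apply (Dist1 m' n' Hm' Hn').
  - apply (Red1 m' n' Hn').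
Qed.

Lemma final_m : Z.abs m = Z.abs m'.
Proof.
  apply (count_gen (-1)); try lia.
  - apply (Dist1m m n Hm Hn).
  - apply (Red1m m n Hm).
  - apply (Dist1m m' n' Hm' Hn').
  - apply (Red1m m' n' Hm').
Qed.

Lemma final_lines : forall (g : word) (b : bool), exists h : word, maps_line_onto m' n' phi g b h b.
Proof.
  intros g b. exists (phi g). split.
  - intros k. assert (H : on (line_pt g b k) g b) by apply on_pt. apply Corr in H. exact H.
  - intros l. destruct (pull g (phi g ++ [(b, l)]) b) as [u [Hu [k Hk]]]. apply on_pt.
    exists k. rewrite <- Hu. symmetry. apply WD. exact Hk.
Qed.

Lemma final_order : forall (g : word) (i j : Z), i < j ->
     exists (h : word) (p q : Z), p < q /\
       bs_eq m' n' (phi (line_pt g gen_t i)) (line_pt h gen_t p) /\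
       bs_eq m' n' (phi (line_pt g gen_t j)) (line_pt h gen_t q).
Proof.
  intros g i j Hij. exists (phi g), i, j. split; auto. split.
  - pose proof (sig_spec g i). rewrite sig_id in H. exact H.
  - pose proof (sig_spec g j). rewrite sig_id in H. exact H.
Qed.

End Main.


Theorem proposition3p1 (m n m' n' : Z) (phi : word -> word) :
  m <> 0 -> n <> 0 -> m' <> 0 -> n' <> 0 ->
  Z.abs m < Z.abs n -> Z.abs m' < Z.abs n' ->
  is_bijection m n m' n' phi ->
  line_preserving m n m' n' phi ->
  (* a-lines onto a-lines, t-lines onto t-lines *)
  (forall (g : word) (b : bool), exists h : word, maps_line_onto m' n' phi g b h b) /\
  (* order along t-lines is preserved *)
  (forall (g : word) (i j : Z), i < j ->
     exists (h : word) (p q : Z), p < q /\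
       bs_eq m' n' (phi (line_pt g gen_t i)) (line_pt h gen_t p) /\
       bs_eq m' n' (phi (line_pt g gen_t j)) (line_pt h gen_t q)) /\
  Z.abs m = Z.abs m' /\ Z.abs n = Z.abs n'.
Proof.
  intros Hm Hn Hm' Hn' Hlt Hlt' Hbij Hlp.
  split; [|split; [|split]].
  - apply (final_lines m n m' n' phi); assumption.
  - apply (final_order m n m' n' phi); assumption.
  - apply (final_m m n m' n' phi); assumption.
  - apply (final_n m n m' n' phi); assumption.
Qed.
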